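(* Let $\phi(x,y,z)=\alpha x+\beta y+\gamma z$ with $\alpha,\beta,\gamma\in\mathbb{R}$ not all zero, and let $S\subset\mathbb{R}^3$ be a cyclic surface which is $\phi$-minimal. Then the planes containing the circles (or arcs of circles) of the foliation of $S$ are parallel to one another.
   Context: For a smooth oriented surface $S\subset\mathbb{R}^3$ with unit normal (Gauss map) $N$, let $H$ denote its mean curvature, normalized so that the mean curvature vector is $\Delta_S X = 2HN$ ($X$ the position vector, $\Delta_S$ the Laplace–Beltrami operator); e.g. for a graph $z=u(x,y)$ with upward normal, $2H=\operatorname{div}\big(\nabla u/\sqrt{1+|\nabla u|^2}\big)$. For the density $e^{\phi}$ on $\mathbb{R}^3$ with $\phi(x,y,z)=\alpha x+\beta y+\gamma z$ (a log-linear density), the vector $\vec v=(\alpha,\beta,\gamma)$ is called the $\phi$-density vector, and the $\phi$-mean curvature is $H_\phi = H-\tfrac12\frac{d\phi}{dN}=H-\tfrac12\langle N,\vec v\rangle$. $S$ is $\phi$-minimal if $H_\phi\equiv 0$, i.e. $H=\tfrac12\langle N,\vec v\rangle$ on $S$ (this condition is independent of the choice of orientation). A cyclic surface is a surface generated by a smooth one-parameter family of circles (not necessarily of the same radius), or of arcs of circles; i.e. locally $X(s,t)=\mathbf c(s)+r(s)(\cos t\,\mathbf e_1(s)+\sin t\,\mathbf e_2(s))$ with $r>0$, $\{\mathbf e_1(s),\mathbf e_2(s)\}$ orthonormal spanning the plane of the $s$-th circle, $t$ in an interval. The result is local. *)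

(* Defs.v *)
From Stdlib Require Import Reals.
Open Scope R_scope.

Record vec3 : Type := V3 { vx : R; vy : R; vz : R }.

Definition vadd (u v : vec3) : vec3 := V3 (vx u + vx v) (vy u + vy v) (vz u + vz v).
Definition vscal (a : R) (u : vec3) : vec3 := V3 (a * vx u) (a * vy u) (a * vz u).
Definition vdot (u v : vec3) : R := vx u * vx v + vy u * vy v + vz u * vz v.
Definition vcross (u v : vec3) : vec3 :=
  V3 (vy u * vz v - vz u * vy v) (vz u * vx v - vx u * vz v) (vx u * vy v - vy u * vx v).
Definition vnorm (u : vec3) : R := sqrt (vdot u u).
Definition vzero : vec3 := V3 0 0 0.

Definition has_deriv3 (f : R -> vec3) (x : R) (d : vec3) : Prop :=
  derivable_pt_lim (fun y => vx (f y)) x (vx d) /\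
  derivable_pt_lim (fun y => vy (f y)) x (vy d) /\
  derivable_pt_lim (fun y => vz (f y)) x (vz d).

Definition smooth_on (a b : R) (f : R -> R) : Prop :=
  exists D : nat -> R -> R, D O = f /\
    forall (n : nat) (x : R), a < x < b -> derivable_pt_lim (D n) x (D (S n) x).

Definition smooth3_on (a b : R) (f : R -> vec3) : Prop :=
  smooth_on a b (fun y => vx (f y)) /\ smooth_on a b (fun y => vy (f y)) /\
  smooth_on a b (fun y => vz (f y)).

(* Normalization: H = (k1+k2)/2, so that
   Delta_S X = 2 H N. *)
Definition unit_normal (Xs Xt : vec3) : vec3 :=
  vscal (/ vnorm (vcross Xs Xt)) (vcross Xs Xt).

Definition mean_curv (Xs Xt Xss Xst Xtt : vec3) : R :=
  let N := unit_normal Xs Xt in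
  let E := vdot Xs Xs in let F := vdot Xs Xt in let G := vdot Xt Xt in
  let e := vdot Xss N in let f := vdot Xst N in let g := vdot Xtt N in
  (e * G - 2 * f * F + g * E) / (2 * (E * G - F * F)).

(* X : (s0,s1) x (t0,t1) -> R^3 is a regular parametrized surface which is
   phi-minimal for the log-linear density with density vector v, i.e.
   H = 1/2 <N, v> at every point. *)
Definition phi_minimal_param (v : vec3) (s0 s1 t0 t1 : R) (X : R -> R -> vec3) : Prop :=
  exists Xs Xt Xss Xst Xtt : R -> R -> vec3,
    forall s t, s0 < s < s1 -> t0 < t < t1 ->
      has_deriv3 (fun u => X u t) s (Xs s t) /\
      has_deriv3 (fun u => X s u) t (Xt s t) /\
      has_deriv3 (fun u => Xs u t) s (Xss s t) /\
      has_deriv3 (fun u => Xs s u) t (Xst s t) /\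
      has_deriv3 (fun u => Xt s u) t (Xtt s t) /\
      vcross (Xs s t) (Xt s t) <> vzero /\
      mean_curv (Xs s t) (Xt s t) (Xss s t) (Xst s t) (Xtt s t)
        = / 2 * vdot (unit_normal (Xs s t) (Xt s t)) v.

Definition cyclic_param (c e1 e2 : R -> vec3) (r : R -> R) (s t : R) : vec3 :=
  vadd (c s) (vscal (r s) (vadd (vscal (cos t) (e1 s)) (vscal (sin t) (e2 s)))).

Definition cyclic_data (s0 s1 : R) (c e1 e2 : R -> vec3) (r : R -> R) : Prop :=
  smooth3_on s0 s1 c /\ smooth3_on s0 s1 e1 /\ smooth3_on s0 s1 e2 /\
  smooth_on s0 s1 r /\
  forall s, s0 < s < s1 ->
    0 < r s /\ vdot (e1 s) (e1 s) = 1 /\ vdot (e2 s) (e2 s) = 1 /\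
    vdot (e1 s) (e2 s) = 0.

(* Main.v *)
Require Import Defs.
From Stdlib Require Import Reals Lra Psatz Classical.
Open Scope R_scope.


Notation dpl := derivable_pt_lim.

Lemma dpl_ext_loc (f g : R -> R) (x l a b : R) :
  a < x < b -> (forall y, a < y < b -> f y = g y) -> dpl g x l -> dpl f x l.
Proof.
  intros Hx Heq Hg eps Heps.
  destruct (Hg eps Heps) as [del Hdel].
  assert (Hm : 0 < Rmin del (Rmin (x - a) (b - x))).
  { apply Rmin_pos; [apply (cond_pos del)|apply Rmin_pos; lra]. }
  exists (mkposreal _ Hm). intros h Hh0 Hh. simpl in Hh.
  assert (Hh1 : Rabs h < del) by (eapply Rlt_le_trans; [exact Hh| apply Rmin_l]).
  assert (Hh2 : Rabs h < Rmin (x - a) (b - x)) by (eapply Rlt_le_trans; [exact Hh| apply Rmin_r]).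
  assert (Hh3 : Rabs h < x - a) by (eapply Rlt_le_trans; [exact Hh2| apply Rmin_l]).
  assert (Hh4 : Rabs h < b - x) by (eapply Rlt_le_trans; [exact Hh2| apply Rmin_r]).
  rewrite (Heq (x+h)), (Heq x); [apply Hdel; auto| lra |].
  apply Rabs_def2 in Hh3. apply Rabs_def2 in Hh4. lra.
Qed.

Lemma dpl_const (k x : R) : dpl (fun _ => k) x 0.
Proof. exact (derivable_pt_lim_const k x). Qed.

Lemma dpl_zero_loc (f : R -> R) (x l a b : R) :
  a < x < b -> (forall y, a < y < b -> f y = 0) -> dpl f x l -> l = 0.
Proof.
  intros Hx H0 Hf. apply (uniqueness_limite f x); auto.
  apply (dpl_ext_loc f (fun _ => 0) x 0 a b Hx H0). apply dpl_const.
Qed.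

Lemma dpl_id (x : R) : dpl (fun y => y) x 1.
Proof. exact (derivable_pt_lim_id x). Qed.

Lemma dpl_plus f g x lf lg : dpl f x lf -> dpl g x lg -> dpl (fun y => f y + g y) x (lf + lg).
Proof. intros; exact (derivable_pt_lim_plus f g x lf lg H H0). Qed.

Lemma dpl_minus f g x lf lg : dpl f x lf -> dpl g x lg -> dpl (fun y => f y - g y) x (lf - lg).
Proof. intros; exact (derivable_pt_lim_minus f g x lf lg H H0). Qed.

Lemma dpl_mult f g x lf lg : dpl f x lf -> dpl g x lg ->
  dpl (fun y => f y * g y) x (lf * g x + f x * lg).
Proof. intros; exact (derivable_pt_lim_mult f g x lf lg H H0). Qed.

Lemma dpl_eq f x l l' : dpl f x l -> l = l' -> dpl f x l'.
Proof. intros H ->; exact H. Qed.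

Lemma dpl_ext f g x l : (forall y, f y = g y) -> dpl g x l -> dpl f x l.
Proof.
  intros H Hg eps Heps. destruct (Hg eps Heps) as [del Hd]. exists del.
  intros h H1 H2. rewrite !H. auto.
Qed.

Lemma dpl_cosk (k t : R) : dpl (fun y => cos (k * y)) t (- sin (k * t) * k).
Proof.
  apply (derivable_pt_lim_comp (fun y => k * y) cos t k).
  - apply dpl_eq with (0 * t + k * 1); [apply dpl_mult; [apply dpl_const|apply dpl_id]|ring].
  - apply derivable_pt_lim_cos.
Qed.

Lemma dpl_sink (k t : R) : dpl (fun y => sin (k * y)) t (cos (k * t) * k).
Proof.
  apply (derivable_pt_lim_comp (fun y => k * y) sin t k).
  - apply dpl_eq with (0 * t + k * 1); [apply dpl_mult; [apply dpl_const|apply dpl_id]|ring].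
  - apply derivable_pt_lim_sin.
Qed.

Record coef9 := C9 { ca0 : R; ca1 : R; cb1 : R; ca2 : R; cb2 : R; ca3 : R; cb3 : R; ca4 : R; cb4 : R }.

Definition hf (c : coef9) (t : R) : R :=
  ca0 c + ca1 c * cos (1 * t) + cb1 c * sin (1 * t) + ca2 c * cos (2 * t) + cb2 c * sin (2 * t)
  + ca3 c * cos (3 * t) + cb3 c * sin (3 * t) + ca4 c * cos (4 * t) + cb4 c * sin (4 * t).

Definition Dop (c : coef9) : coef9 :=
  C9 0 (1 * cb1 c) (- (1 * ca1 c)) (2 * cb2 c) (- (2 * ca2 c)) (3 * cb3 c) (- (3 * ca3 c))
     (4 * cb4 c) (- (4 * ca4 c)).


Lemma hf_deriv c t : dpl (hf c) t (hf (Dop c) t).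
Proof.
  unfold hf.
  eapply dpl_eq.
  { repeat apply dpl_plus.
    all: try apply dpl_const.
    all: apply dpl_mult; [apply dpl_const| first [apply dpl_cosk | apply dpl_sink]]. }
  unfold Dop; simpl. ring.
Qed.

Lemma hf_zero_D c t0 t1 : (forall t, t0 < t < t1 -> hf c t = 0) ->
  forall t, t0 < t < t1 -> hf (Dop c) t = 0.
Proof.
  intros H t Ht. apply (dpl_zero_loc (hf c) t _ t0 t1 Ht H). apply hf_deriv.
Qed.

Lemma hf_zero_iter n c t0 t1 : (forall t, t0 < t < t1 -> hf c t = 0) ->
  forall t, t0 < t < t1 -> hf (Nat.iter n Dop c) t = 0.
Proof.
  induction n; simpl; intros H t Ht; auto.
  apply (hf_zero_D _ t0 t1); auto.
Qed.

Lemma hf_all_zero c t0 t1 : t0 < t1 -> (forall t, t0 < t < t1 -> hf c t = 0) ->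
  ca0 c = 0 /\ ca1 c = 0 /\ cb1 c = 0 /\ ca2 c = 0 /\ cb2 c = 0 /\
  ca3 c = 0 /\ cb3 c = 0 /\ ca4 c = 0 /\ cb4 c = 0.
Proof.
  intros Hlt H. set (t := (t0 + t1) / 2). assert (Ht : t0 < t < t1) by (unfold t; lra).
  pose proof (fun n => hf_zero_iter n c t0 t1 H t Ht) as E.
  destruct c as [a0 a1 b1 a2 b2 a3 b3 a4 b4]. simpl.
  set (g0 := a0).
  set (g1 := a1 * cos (1*t) + b1 * sin (1*t)).
  set (g2 := a2 * cos (2*t) + b2 * sin (2*t)).
  set (g3 := a3 * cos (3*t) + b3 * sin (3*t)).
  set (g4 := a4 * cos (4*t) + b4 * sin (4*t)).
  set (h1 := b1 * cos (1*t) - a1 * sin (1*t)).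
  set (h2 := b2 * cos (2*t) - a2 * sin (2*t)).
  set (h3 := b3 * cos (3*t) - a3 * sin (3*t)).
  set (h4 := b4 * cos (4*t) - a4 * sin (4*t)).
  assert (E0 : g0 + g1 + g2 + g3 + g4 = 0) by (rewrite <- (E 0%nat); unfold hf; simpl; unfold g0,g1,g2,g3,g4; ring).
  assert (E2 : - g1 - 4*g2 - 9*g3 - 16*g4 = 0) by (rewrite <- (E 2%nat); unfold hf; simpl; unfold g0,g1,g2,g3,g4; ring).
  assert (E4 : g1 + 16*g2 + 81*g3 + 256*g4 = 0) by (rewrite <- (E 4%nat); unfold hf; simpl; unfold g0,g1,g2,g3,g4; ring).
  assert (E6 : - g1 - 64*g2 - 729*g3 - 4096*g4 = 0) by (rewrite <- (E 6%nat); unfold hf; simpl; unfold g0,g1,g2,g3,g4; ring).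
  assert (E8 : g1 + 256*g2 + 6561*g3 + 65536*g4 = 0) by (rewrite <- (E 8%nat); unfold hf; simpl; unfold g0,g1,g2,g3,g4; ring).
  assert (E1 : h1 + 2*h2 + 3*h3 + 4*h4 = 0) by (rewrite <- (E 1%nat); unfold hf; simpl; unfold h1,h2,h3,h4; ring).
  assert (E3 : - h1 - 8*h2 - 27*h3 - 64*h4 = 0) by (rewrite <- (E 3%nat); unfold hf; simpl; unfold h1,h2,h3,h4; ring).
  assert (E5 : h1 + 32*h2 + 243*h3 + 1024*h4 = 0) by (rewrite <- (E 5%nat); unfold hf; simpl; unfold h1,h2,h3,h4; ring).
  assert (E7 : - h1 - 128*h2 - 2187*h3 - 16384*h4 = 0) by (rewrite <- (E 7%nat); unfold hf; simpl; unfold h1,h2,h3,h4; ring).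
  assert (E9 : h1 + 512*h2 + 19683*h3 + 262144*h4 = 0) by (rewrite <- (E 9%nat); unfold hf; simpl; unfold h1,h2,h3,h4; ring).
  assert (G0 : g0 = 0) by lra. assert (G1 : g1 = 0) by lra. assert (G2 : g2 = 0) by lra.
  assert (G3 : g3 = 0) by lra. assert (G4 : g4 = 0) by lra.
  assert (K1 : h1 = 0) by lra. assert (K2 : h2 = 0) by lra. assert (K3 : h3 = 0) by lra. assert (K4 : h4 = 0) by lra.
  assert (AB : forall a b x, a * cos x + b * sin x = 0 -> b * cos x - a * sin x = 0 -> a = 0 /\ b = 0).
  { intros a b x Hg Hh. pose proof (sin2_cos2 x) as Hsc.
    assert (e1 : a * ((sin x)² + (cos x)²) = cos x * (a * cos x + b * sin x) - sin x * (b * cos x - a * sin x)) by (unfold Rsqr; ring).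
    assert (e2 : b * ((sin x)² + (cos x)²) = sin x * (a * cos x + b * sin x) + cos x * (b * cos x - a * sin x)) by (unfold Rsqr; ring).
    rewrite Hsc, Hg, Hh in e1, e2. split; lra. }
  destruct (AB a1 b1 _ G1 K1), (AB a2 b2 _ G2 K2), (AB a3 b3 _ G3 K3), (AB a4 b4 _ G4 K4).
  repeat split; auto.
Qed.

Definition tpoly (a0 a1 b1 a2 b2 a3 b3 a4 b4 C S : R) : R :=
  a0 + a1 * C + b1 * S + a2 * (C^2 - S^2) + b2 * (2 * C * S)
  + a3 * (C^3 - 3 * C * S^2) + b3 * (3 * C^2 * S - S^3)
  + a4 * (C^4 - 6 * C^2 * S^2 + S^4) + b4 * (4 * C^3 * S - 4 * C * S^3).

Lemma hf_tpoly a0 a1 b1 a2 b2 a3 b3 a4 b4 t :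
  hf (C9 a0 a1 b1 a2 b2 a3 b3 a4 b4) t = tpoly a0 a1 b1 a2 b2 a3 b3 a4 b4 (cos t) (sin t).
Proof.
  assert (c2 : cos (2 * t) = cos t ^ 2 - sin t ^ 2) by (replace (2 * t) with (t + t) by ring; rewrite cos_plus; ring).
  assert (s2 : sin (2 * t) = 2 * cos t * sin t) by (replace (2 * t) with (t + t) by ring; rewrite sin_plus; ring).
  assert (c3 : cos (3 * t) = cos t ^ 3 - 3 * cos t * sin t ^ 2) by (replace (3 * t) with (2 * t + t) by ring; rewrite cos_plus, c2, s2; ring).
  assert (s3 : sin (3 * t) = 3 * cos t ^ 2 * sin t - sin t ^ 3) by (replace (3 * t) with (2 * t + t) by ring; rewrite sin_plus, c2, s2; ring).
  assert (c4 : cos (4 * t) = cos t ^ 4 - 6 * cos t ^ 2 * sin t ^ 2 + sin t ^ 4) by (replace (4 * t) with (2 * t + 2 * t) by ring; rewrite cos_plus, c2, s2; ring).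
  assert (s4 : sin (4 * t) = 4 * cos t ^ 3 * sin t - 4 * cos t * sin t ^ 3) by (replace (4 * t) with (2 * t + 2 * t) by ring; rewrite sin_plus, c2, s2; ring).
  unfold hf, tpoly; simpl. rewrite c2, s2, c3, s3, c4, s4, !Rmult_1_l. ring.
Qed.

Lemma tpoly_all_zero a0 a1 b1 a2 b2 a3 b3 a4 b4 t0 t1 : t0 < t1 ->
  (forall t, t0 < t < t1 -> tpoly a0 a1 b1 a2 b2 a3 b3 a4 b4 (cos t) (sin t) = 0) ->
  a0 = 0 /\ a1 = 0 /\ b1 = 0 /\ a2 = 0 /\ b2 = 0 /\ a3 = 0 /\ b3 = 0 /\ a4 = 0 /\ b4 = 0.
Proof.
  intros Hlt H. apply (hf_all_zero (C9 a0 a1 b1 a2 b2 a3 b3 a4 b4) t0 t1 Hlt).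
  intros t Ht. rewrite hf_tpoly. auto.
Qed.

Lemma dpl_opp f x l : dpl f x l -> dpl (fun y => - f y) x (- l).
Proof. intros; exact (derivable_pt_lim_opp f x l H). Qed.


Lemma vec_eq (u v : vec3) : vx u = vx v -> vy u = vy v -> vz u = vz v -> u = v.
Proof. destruct u, v; simpl; intros -> -> ->; reflexivity. Qed.

Definition Fr (e1 e2 x : vec3) : vec3 :=
  vadd (vscal (vx x) e1) (vadd (vscal (vy x) e2) (vscal (vz x) (vcross e1 e2))).

Section Frame.
Variables e1 e2 : vec3.
Hypothesis H11 : vdot e1 e1 = 1.
Hypothesis H22 : vdot e2 e2 = 1.
Hypothesis H12 : vdot e1 e2 = 0.

Lemma nn : vdot (vcross e1 e2) (vcross e1 e2) = 1.
Proof.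
  replace 1 with (vdot e1 e1 * vdot e2 e2 - vdot e1 e2 * vdot e1 e2) by (rewrite H11, H22, H12; ring).
  destruct e1, e2; unfold vdot, vcross; simpl; ring.
Qed.

Lemma n1 : vdot (vcross e1 e2) e1 = 0.
Proof. destruct e1, e2; unfold vdot, vcross; simpl; ring. Qed.
Lemma n2 : vdot (vcross e1 e2) e2 = 0.
Proof. destruct e1, e2; unfold vdot, vcross; simpl; ring. Qed.

Lemma dot_Fr x y : vdot (Fr e1 e2 x) (Fr e1 e2 y) = vdot x y.
Proof.
  pose proof nn as A. pose proof n1 as B. pose proof n2 as C.
  transitivity (vx x * vx y * vdot e1 e1 + vy x * vy y * vdot e2 e2 + vz x * vz y * vdot (vcross e1 e2) (vcross e1 e2)
    + (vx x * vy y + vy x * vx y) * vdot e1 e2 + (vx x * vz y + vz x * vx y) * vdot (vcross e1 e2) e1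
    + (vy x * vz y + vz x * vy y) * vdot (vcross e1 e2) e2).
  - unfold Fr. generalize (vcross e1 e2). intro n. destruct e1, e2, n, x, y; unfold vdot, vadd, vscal; simpl; ring.
  - rewrite A, B, C, H11, H22, H12. unfold vdot; ring.
Qed.

Lemma cross_Fr x y : vcross (Fr e1 e2 x) (Fr e1 e2 y) = Fr e1 e2 (vcross x y).
Proof.
  assert (A : vcross e2 (vcross e1 e2) = e1).
  { apply vec_eq;
    [transitivity (vx e1 * vdot e2 e2 - vx e2 * vdot e2 e1)
    |transitivity (vy e1 * vdot e2 e2 - vy e2 * vdot e2 e1)
    |transitivity (vz e1 * vdot e2 e2 - vz e2 * vdot e2 e1)];
    try (destruct e1, e2; unfold vdot, vcross; simpl; ring);
    replace (vdot e2 e1) with (vdot e1 e2) by (unfold vdot; ring); rewrite H22, H12; ring. }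
  assert (B : vcross (vcross e1 e2) e1 = e2).
  { apply vec_eq;
    [transitivity (vx e2 * vdot e1 e1 - vx e1 * vdot e1 e2)
    |transitivity (vy e2 * vdot e1 e1 - vy e1 * vdot e1 e2)
    |transitivity (vz e2 * vdot e1 e1 - vz e1 * vdot e1 e2)];
    try (destruct e1, e2; unfold vdot, vcross; simpl; ring);
    rewrite H11, H12; ring. }
  set (n := vcross e1 e2) in *.
  assert (Gen : forall f1 f2 f3 : vec3, vcross e1 e2 = f3 -> vcross e2 f3 = f1 -> vcross f3 e1 = f2 ->
     vcross (Fr e1 e2 x) (Fr e1 e2 y) =
     vadd (vscal (vy x * vz y - vz x * vy y) f1) (vadd (vscal (vz x * vx y - vx x * vz y) f2)
        (vscal (vx x * vy y - vy x * vx y) f3))).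
  { intros f1 f2 f3 E3 E1 E2. subst f1 f2 f3. unfold Fr, n.
    destruct e1, e2, x, y; apply vec_eq; unfold vcross, vadd, vscal; simpl; ring. }
  rewrite (Gen e1 e2 n eq_refl A B).
  unfold Fr. destruct x, y; apply vec_eq; unfold vcross, vadd, vscal; simpl; ring.
Qed.

Lemma complete X : X = Fr e1 e2 (V3 (vdot X e1) (vdot X e2) (vdot X (vcross e1 e2))).
Proof.
  assert (A : vcross e2 (vcross e1 e2) = e1).
  { apply vec_eq;
    [transitivity (vx e1 * vdot e2 e2 - vx e2 * vdot e2 e1)
    |transitivity (vy e1 * vdot e2 e2 - vy e2 * vdot e2 e1)
    |transitivity (vz e1 * vdot e2 e2 - vz e2 * vdot e2 e1)];
    try (destruct e1, e2; unfold vdot, vcross; simpl; ring);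
    replace (vdot e2 e1) with (vdot e1 e2) by (unfold vdot; ring); rewrite H22, H12; ring. }
  assert (B : vcross (vcross e1 e2) e1 = e2).
  { apply vec_eq;
    [transitivity (vx e2 * vdot e1 e1 - vx e1 * vdot e1 e2)
    |transitivity (vy e2 * vdot e1 e1 - vy e1 * vdot e1 e2)
    |transitivity (vz e2 * vdot e1 e1 - vz e1 * vdot e1 e2)];
    try (destruct e1, e2; unfold vdot, vcross; simpl; ring);
    rewrite H11, H12; ring. }
  assert (Dt : vdot e1 (vcross e2 (vcross e1 e2)) = 1) by (rewrite A; auto).
  assert (Gen : forall a b c0 : vec3,
    vscal (vdot a (vcross b c0)) X =
    vadd (vscal (vdot X a) (vcross b c0)) (vadd (vscal (vdot X b) (vcross c0 a)) (vscal (vdot X c0) (vcross a b)))).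
  { intros a b c0. destruct a, b, c0, X; apply vec_eq; unfold vdot, vcross, vadd, vscal; simpl; ring. }
  pose proof (Gen e1 e2 (vcross e1 e2)) as G. rewrite Dt, A, B in G.
  unfold Fr. simpl. rewrite <- G. destruct X; apply vec_eq; unfold vscal; simpl; ring.
Qed.

End Frame.

Lemma Fr_lin e1 e2 k1 k2 x y :
  Fr e1 e2 (vadd (vscal k1 x) (vscal k2 y)) = vadd (vscal k1 (Fr e1 e2 x)) (vscal k2 (Fr e1 e2 y)).
Proof. destruct e1, e2, x, y; apply vec_eq; unfold Fr, vcross, vadd, vscal; simpl; ring. Qed.

Definition PG (Xs Xt Xss Xst Xtt v : vec3) : R :=
  let W := vcross Xs Xt in
  vdot Xt Xt * vdot Xss W - 2 * vdot Xs Xt * vdot Xst W + vdot Xs Xs * vdot Xtt W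
  - vdot W v * vdot W W.

Lemma PG_Fr e1 e2 x1 x2 x3 x4 x5 x6 :
  vdot e1 e1 = 1 -> vdot e2 e2 = 1 -> vdot e1 e2 = 0 ->
  PG (Fr e1 e2 x1) (Fr e1 e2 x2) (Fr e1 e2 x3) (Fr e1 e2 x4) (Fr e1 e2 x5) (Fr e1 e2 x6)
  = PG x1 x2 x3 x4 x5 x6.
Proof.
  intros A B C. unfold PG. rewrite !cross_Fr, !dot_Fr by auto. reflexivity.
Qed.

Definition hA0 (p q m a b d g2 g3 h3 k1 k2 k3 r r1 r2 al be ga : R) : R :=
  (8 * a * b * q * r^4 - 8 * a * d * p * r^4 + 3 * al * b * d^2 * r^6 + 12 * al * b * m^2 * r^4 + 3 * al * b * p^2 * r^4 + al * b * q^2 * r^4 + 4 * al * b * r^4 * r1^2 + 3 * al * b^3 * r^6 + 2 * al * d * p * q * r^4 + 8 * al * m * p * r^3 * r1 + 2 * b * be * p * q * r^4 - 8 * b * ga * m * p * r^4 - 4 * b * k1 * r^4 + 8 * b * p * r^3 * r1 + 3 * b^2 * be * d * r^6 - 4 * b^2 * ga * r^5 * r1 + 16 * b^2 * m * r^4 + 12 * be * d * m^2 * r^4 + be * d * p^2 * r^4 + 3 * be * d * q^2 * r^4 + 4 * be * d * r^4 * r1^2 + 3 * be * d^3 * r^6 + 8 * be * m * q * r^3 * r1 - 8 * d * ga * m * q * r^4 - 4 * d * k2 * r^4 + 8 * d * q * r^3 * r1 - 4 * d^2 * ga * r^5 * r1 + 16 * d^2 * m * r^4 + 4 * g3 * p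 * r^4 - 8 * ga * m^2 * r^3 * r1 - 12 * ga * p^2 * r^3 * r1 - 12 * ga * q^2 * r^3 * r1 - 8 * ga * r^3 * r1^3 + 4 * h3 * q * r^4 + 8 * k3 * r^3 * r1 + 8 * m * p^2 * r^2 + 8 * m * q^2 * r^2 + 8 * m * r^2 * r1^2 - 8 * m * r^3 * r2 + 8 * m^3 * r^2).

Definition hA1 (p q m a b d g2 g3 h3 k1 k2 k3 r r1 r2 al be ga : R) : R :=
  (- 16 * a * d * r^4 * r1 + 12 * al * b * p * r^4 * r1 + 18 * al * b^2 * m * r^5 + 4 * al * d * q * r^4 * r1 + 6 * al * d^2 * m * r^5 + 6 * al * m * p^2 * r^3 + 2 * al * m * q^2 * r^3 + 8 * al * m * r^3 * r1^2 + 8 * al * m^3 * r^3 + 12 * b * be * d * m * r^5 + 4 * b * be * q * r^4 * r1 - 4 * b * d * ga * q * r^5 + 12 * b * d^2 * r^5 - 16 * b * ga * m * r^4 * r1 + 24 * b * m^2 * r^3 + 4 * b * p^2 * r^3 + 12 * b * q^2 * r^3 + 24 * b * r^3 * r1^2 - 8 * b * r^4 * r2 - 6 * b^2 * ga * p * r^5 + 12 * b^3 * r^5 + 4 * be * d * p * r^4 * r1 + 4 * be * m * p * q * r^3 - 8 * d * p * q * r^3 - 2 * d^2 * ga * p * r^5 + 8 * g3 * r^4 * r1 - 8 * ga * m^2 * p * r^3 - 6 * ga * p * q^2 * r^3 - 24 * ga * p * r^3 * r1^2 - 6 * ga * p^3 * r^3 - 8 * k1 * m * r^3 + 8 * k3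 * p * r^3 + 16 * m * p * r^2 * r1).

Definition hB1 (p q m a b d g2 g3 h3 k1 k2 k3 r r1 r2 al be ga : R) : R :=
  (16 * a * b * r^4 * r1 + 12 * al * b * d * m * r^5 + 4 * al * b * q * r^4 * r1 + 4 * al * d * p * r^4 * r1 + 4 * al * m * p * q * r^3 + 4 * b * be * p * r^4 * r1 - 4 * b * d * ga * p * r^5 - 8 * b * p * q * r^3 + 6 * b^2 * be * m * r^5 + 12 * b^2 * d * r^5 - 2 * b^2 * ga * q * r^5 + 12 * be * d * q * r^4 * r1 + 18 * be * d^2 * m * r^5 + 2 * be * m * p^2 * r^3 + 6 * be * m * q^2 * r^3 + 8 * be * m * r^3 * r1^2 + 8 * be * m^3 * r^3 - 16 * d * ga * m * r^4 * r1 + 24 * d * m^2 * r^3 + 12 * d * p^2 * r^3 + 4 * d * q^2 * r^3 + 24 * d * r^3 * r1^2 - 8 * d * r^4 * r2 - 6 * d^2 * ga * q * r^5 + 12 * d^3 * r^5 - 8 * ga * m^2 * q * r^3 - 6 * ga * p^2 * q * r^3 - 24 * ga * q * r^3 * r1^2 - 6 * ga * q^3 * r^3 + 8 * h3 * r^4 * r1 - 8 * k2 * m * r^3 + 8 * k3 * q * r^3 + 16 * m * q * r^2 * r1).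

Definition hA2 (p q m a b d g2 g3 h3 k1 k2 k3 r r1 r2 al be ga : R) : R :=
  (- 8 * a * b * q * r^4 - 8 * a * d * p * r^4 + 12 * al * b * m^2 * r^4 + 4 * al * b * p^2 * r^4 + 4 * al * b * r^4 * r1^2 + 4 * al * b^3 * r^6 + 8 * al * m * p * r^3 * r1 - 8 * b * ga * m * p * r^4 - 4 * b * k1 * r^4 + 24 * b * p * r^3 * r1 - 4 * b^2 * ga * r^5 * r1 + 16 * b^2 * m * r^4 - 12 * be * d * m^2 * r^4 - 4 * be * d * q^2 * r^4 - 4 * be * d * r^4 * r1^2 - 4 * be * d^3 * r^6 - 8 * be * m * q * r^3 * r1 + 8 * d * ga * m * q * r^4 + 4 * d * k2 * r^4 - 24 * d * q * r^3 * r1 + 4 * d^2 * ga * r^5 * r1 - 16 * d^2 * m * r^4 + 4 * g3 * p * r^4 - 12 * ga * p^2 * r^3 * r1 + 12 * ga * q^2 * r^3 * r1 - 4 * h3 * q * r^4).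

Definition hB2 (p q m a b d g2 g3 h3 k1 k2 k3 r r1 r2 al be ga : R) : R :=
  (8 * a * b * p * r^4 - 8 * a * d * q * r^4 + 4 * al * b * p * q * r^4 + 6 * al * b^2 * d * r^6 + 12 * al * d * m^2 * r^4 + 2 * al * d * p^2 * r^4 + 2 * al * d * q^2 * r^4 + 4 * al * d * r^4 * r1^2 + 2 * al * d^3 * r^6 + 8 * al * m * q * r^3 * r1 + 6 * b * be * d^2 * r^6 + 12 * b * be * m^2 * r^4 + 2 * b * be * p^2 * r^4 + 2 * b * be * q^2 * r^4 + 4 * b * be * r^4 * r1^2 - 8 * b * d * ga * r^5 * r1 + 32 * b * d * m * r^4 - 8 * b * ga * m * q * r^4 - 4 * b * k2 * r^4 + 24 * b * q * r^3 * r1 + 2 * b^3 * be * r^6 + 4 * be * d * p * q * r^4 + 8 * be * m * p * r^3 * r1 - 8 * d * ga * m * p * r^4 - 4 * d * k1 * r^4 + 24 * d * p * r^3 * r1 + 4 * g3 * q * r^4 - 24 * ga * p * q * r^3 * r1 + 4 * h3 * p * r^4).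

Definition hA3 (p q m a b d g2 g3 h3 k1 k2 k3 r r1 r2 al be ga : R) : R :=
  (4 * al * b * p * r^4 * r1 + 6 * al * b^2 * m * r^5 - 4 * al * d * q * r^4 * r1 - 6 * al * d^2 * m * r^5 + 2 * al * m * p^2 * r^3 - 2 * al * m * q^2 * r^3 - 12 * b * be * d * m * r^5 - 4 * b * be * q * r^4 * r1 + 4 * b * d * ga * q * r^5 - 12 * b * d^2 * r^5 + 4 * b * p^2 * r^3 - 4 * b * q^2 * r^3 - 2 * b^2 * ga * p * r^5 + 4 * b^3 * r^5 - 4 * be * d * p * r^4 * r1 - 4 * be * m * p * q * r^3 - 8 * d * p * q * r^3 + 2 * d^2 * ga * p * r^5 + 6 * ga * p * q^2 * r^3 - 2 * ga * p^3 * r^3).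

Definition hB3 (p q m a b d g2 g3 h3 k1 k2 k3 r r1 r2 al be ga : R) : R :=
  (12 * al * b * d * m * r^5 + 4 * al * b * q * r^4 * r1 + 4 * al * d * p * r^4 * r1 + 4 * al * m * p * q * r^3 + 4 * b * be * p * r^4 * r1 - 4 * b * d * ga * p * r^5 + 8 * b * p * q * r^3 + 6 * b^2 * be * m * r^5 + 12 * b^2 * d * r^5 - 2 * b^2 * ga * q * r^5 - 4 * be * d * q * r^4 * r1 - 6 * be * d^2 * m * r^5 + 2 * be * m * p^2 * r^3 - 2 * be * m * q^2 * r^3 + 4 * d * p^2 * r^3 - 4 * d * q^2 * r^3 + 2 * d^2 * ga * q * r^5 - 4 * d^3 * r^5 - 6 * ga * p^2 * q * r^3 + 2 * ga * q^3 * r^3).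

Definition hA4 (p q m a b d g2 g3 h3 k1 k2 k3 r r1 r2 al be ga : R) : R :=
  (- 3 * al * b * d^2 * r^6 + al * b * p^2 * r^4 - al * b * q^2 * r^4 + al * b^3 * r^6 - 2 * al * d * p * q * r^4 - 2 * b * be * p * q * r^4 - 3 * b^2 * be * d * r^6 - be * d * p^2 * r^4 + be * d * q^2 * r^4 + be * d^3 * r^6).

Definition hB4 (p q m a b d g2 g3 h3 k1 k2 k3 r r1 r2 al be ga : R) : R :=
  (2 * al * b * p * q * r^4 + 3 * al * b^2 * d * r^6 + al * d * p^2 * r^4 - al * d * q^2 * r^4 - al * d^3 * r^6 - 3 * b * be * d^2 * r^6 + b * be * p^2 * r^4 - b * be * q^2 * r^4 + b^3 * be * r^6 - 2 * be * d * p * q * r^4).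

Definition hQ (p q m a b d g2 g3 h3 k1 k2 k3 r r1 r2 al be ga : R) (cc ss : R) : R :=
  (16 * cc * ss * a * b * p * r^4 - 16 * cc * ss * a * d * q * r^4 + 8 * cc * ss * al * b * p * q * r^4 + 12 * cc * ss * al * b^2 * d * r^6 + 24 * cc * ss * al * d * m^2 * r^4 + 4 * cc * ss * al * d * p^2 * r^4 + 4 * cc * ss * al * d * q^2 * r^4 + 8 * cc * ss * al * d * r^4 * r1^2 + 4 * cc * ss * al * d^3 * r^6 + 16 * cc * ss * al * m * q * r^3 * r1 + 12 * cc * ss * b * be * d^2 * r^6 + 24 * cc * ss * b * be * m^2 * r^4 + 4 * cc * ss * b * be * p^2 * r^4 + 4 * cc * ss * b * be * q^2 * r^4 + 8 * cc * ss * b * be * r^4 * r1^2 - 16 * cc * ss * b * d * ga * r^5 * r1 + 64 * cc * ss * b * d * m * r^4 - 16 * cc * ss * b * ga * m * q * r^4 - 8 * cc * ss * b * k2 * r^4 + 48 * cc * ss * b * q * r^3 * r1 + 4 * cc * ss * b^3 * be * r^6 + 8 * cc * ss * be * d * p * q * r^4 + 16 * cc * ss * be * m * p * r^3 * r1 - 16 * cc * ss * d * ga * m * p * r^4 - 8 * cc * ss * d * k1 * r^4 + 48 * cc * ss * d * p * r^3 * r1 + 8 * cc * ss * g3 * q * r^4 - 48 * cc * ss * ga * p * q * r^3 * r1 + 8 * cc * ss * h3 * p * r^4 - 16 * cc * ss^2 * a * d * r^4 * r1 + 16 * cc * ss^2 * al * d * q * r^4 * r1 + 24 * cc * ss^2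 * al * d^2 * m * r^5 + 8 * cc * ss^2 * al * m * r^3 * r1^2 + 48 * cc * ss^2 * b * be * d * m * r^5 + 16 * cc * ss^2 * b * be * q * r^4 * r1 - 16 * cc * ss^2 * b * d * ga * q * r^5 + 48 * cc * ss^2 * b * d^2 * r^5 - 16 * cc * ss^2 * b * ga * m * r^4 * r1 + 24 * cc * ss^2 * b * r^3 * r1^2 - 8 * cc * ss^2 * b * r^4 * r2 + 16 * cc * ss^2 * be * d * p * r^4 * r1 - 8 * cc * ss^2 * d^2 * ga * p * r^5 + 8 * cc * ss^2 * g3 * r^4 * r1 - 24 * cc * ss^2 * ga * p * r^3 * r1^2 + 8 * cc * ss^3 * al * d * r^4 * r1^2 + 8 * cc * ss^3 * al * d^3 * r^6 + 24 * cc * ss^3 * b * be * d^2 * r^6 + 8 * cc * ss^3 * b * be * r^4 * r1^2 - 16 * cc * ss^3 * b * d * ga * r^5 * r1 - 16 * cc * a * d * r^4 * r1 + 12 * cc * al * b * p * r^4 * r1 + 18 * cc * al * b^2 * m * r^5 + 4 * cc * al * d * q * r^4 * r1 + 6 * cc * al * d^2 * m * r^5 + 6 * cc * al * m * p^2 * r^3 + 2 * cc * al * m * q^2 * r^3 + 8 * cc * al * m * r^3 * r1^2 + 8 * cc * al * m^3 * r^3 + 12 * cc * b * be * d * m * r^5 + 4 * cc * b * be * q * r^4 * r1 - 4 * cc * b * d * ga * q * r^5 + 12 * cc * b * d^2 * r^5 - 16 * cc * b * ga * m * r^4 * r1 + 24 * cc * b * m^2 * r^3 + 4 * cc * b * p^2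 * r^3 + 12 * cc * b * q^2 * r^3 + 24 * cc * b * r^3 * r1^2 - 8 * cc * b * r^4 * r2 - 6 * cc * b^2 * ga * p * r^5 + 12 * cc * b^3 * r^5 + 4 * cc * be * d * p * r^4 * r1 + 4 * cc * be * m * p * q * r^3 - 8 * cc * d * p * q * r^3 - 2 * cc * d^2 * ga * p * r^5 + 8 * cc * g3 * r^4 * r1 - 8 * cc * ga * m^2 * p * r^3 - 6 * cc * ga * p * q^2 * r^3 - 24 * cc * ga * p * r^3 * r1^2 - 6 * cc * ga * p^3 * r^3 - 8 * cc * k1 * m * r^3 + 8 * cc * k3 * p * r^3 + 16 * cc * m * p * r^2 * r1 + 16 * cc^2 * ss * a * b * r^4 * r1 + 48 * cc^2 * ss * al * b * d * m * r^5 + 16 * cc^2 * ss * al * b * q * r^4 * r1 + 16 * cc^2 * ss * al * d * p * r^4 * r1 + 16 * cc^2 * ss * b * be * p * r^4 * r1 - 16 * cc^2 * ss * b * d * ga * p * r^5 + 24 * cc^2 * ss * b^2 * be * m * r^5 + 48 * cc^2 * ss * b^2 * d * r^5 - 8 * cc^2 * ss * b^2 * ga * q * r^5 + 8 * cc^2 * ss * be * m * r^3 * r1^2 - 16 * cc^2 * ss * d * ga * m * r^4 * r1 + 24 * cc^2 * ss * d * r^3 * r1^2 - 8 * cc^2 * ss * d * r^4 * r2 - 24 * cc^2 * ss * ga * q * r^3 * r1^2 + 8 * cc^2 * ss * h3 * r^4 * r1 + 24 * cc^2 * ss^2 * al * b * d^2 * r^6 + 8 * cc^2 * ss^2 * al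 * b * r^4 * r1^2 + 24 * cc^2 * ss^2 * b^2 * be * d * r^6 - 8 * cc^2 * ss^2 * b^2 * ga * r^5 * r1 + 8 * cc^2 * ss^2 * be * d * r^4 * r1^2 - 8 * cc^2 * ss^2 * d^2 * ga * r^5 * r1 - 16 * cc^2 * ss^2 * ga * r^3 * r1^3 - 16 * cc^2 * a * d * p * r^4 + 3 * cc^2 * al * b * d^2 * r^6 + 24 * cc^2 * al * b * m^2 * r^4 + 7 * cc^2 * al * b * p^2 * r^4 + cc^2 * al * b * q^2 * r^4 + 8 * cc^2 * al * b * r^4 * r1^2 + 7 * cc^2 * al * b^3 * r^6 + 2 * cc^2 * al * d * p * q * r^4 + 16 * cc^2 * al * m * p * r^3 * r1 + 2 * cc^2 * b * be * p * q * r^4 - 16 * cc^2 * b * ga * m * p * r^4 - 8 * cc^2 * b * k1 * r^4 + 32 * cc^2 * b * p * r^3 * r1 + 3 * cc^2 * b^2 * be * d * r^6 - 8 * cc^2 * b^2 * ga * r^5 * r1 + 32 * cc^2 * b^2 * m * r^4 + cc^2 * be * d * p^2 * r^4 - cc^2 * be * d * q^2 * r^4 - cc^2 * be * d^3 * r^6 - 16 * cc^2 * d * q * r^3 * r1 + 8 * cc^2 * g3 * p * r^4 - 8 * cc^2 * ga * m^2 * r^3 * r1 - 24 * cc^2 * ga * p^2 * r^3 * r1 - 8 * cc^2 * ga * r^3 * r1^3 + 8 * cc^2 * k3 * r^3 * r1 + 8 * cc^2 * m * r^2 * r1^2 - 8 * cc^2 * m * r^3 * r2 + 24 * cc^3 *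 ss * al * b^2 * d * r^6 + 8 * cc^3 * ss * al * d * r^4 * r1^2 + 8 * cc^3 * ss * b * be * r^4 * r1^2 - 16 * cc^3 * ss * b * d * ga * r^5 * r1 + 8 * cc^3 * ss * b^3 * be * r^6 - 16 * cc^3 * a * d * r^4 * r1 + 16 * cc^3 * al * b * p * r^4 * r1 + 24 * cc^3 * al * b^2 * m * r^5 + 8 * cc^3 * al * m * r^3 * r1^2 - 16 * cc^3 * b * ga * m * r^4 * r1 + 24 * cc^3 * b * r^3 * r1^2 - 8 * cc^3 * b * r^4 * r2 - 8 * cc^3 * b^2 * ga * p * r^5 + 16 * cc^3 * b^3 * r^5 + 8 * cc^3 * g3 * r^4 * r1 - 24 * cc^3 * ga * p * r^3 * r1^2 + 8 * cc^4 * al * b * r^4 * r1^2 + 8 * cc^4 * al * b^3 * r^6 - 8 * cc^4 * b^2 * ga * r^5 * r1 - 8 * cc^4 * ga * r^3 * r1^3 + 16 * ss * a * b * r^4 * r1 + 12 * ss * al * b * d * m * r^5 + 4 * ss * al * b * q * r^4 * r1 + 4 * ss * al * d * p * r^4 * r1 + 4 * ss * al * m * p * q * r^3 + 4 * ss * b * be * p * r^4 * r1 - 4 * ss * b * d * ga * p * r^5 - 8 * ss * b * p * q * r^3 + 6 * ss * b^2 * be * m * r^5 + 12 * ss * b^2 * d * r^5 - 2 * ss * b^2 * ga * q * r^5 + 12 * ss * be * d * q * r^4 * r1 + 18 * ss * be * d^2 * m * r^5 + 2 * ss * be * m * p^2 * r^3 + 6 * ss * be * m * q^2 * r^3 + 8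 * ss * be * m * r^3 * r1^2 + 8 * ss * be * m^3 * r^3 - 16 * ss * d * ga * m * r^4 * r1 + 24 * ss * d * m^2 * r^3 + 12 * ss * d * p^2 * r^3 + 4 * ss * d * q^2 * r^3 + 24 * ss * d * r^3 * r1^2 - 8 * ss * d * r^4 * r2 - 6 * ss * d^2 * ga * q * r^5 + 12 * ss * d^3 * r^5 - 8 * ss * ga * m^2 * q * r^3 - 6 * ss * ga * p^2 * q * r^3 - 24 * ss * ga * q * r^3 * r1^2 - 6 * ss * ga * q^3 * r^3 + 8 * ss * h3 * r^4 * r1 - 8 * ss * k2 * m * r^3 + 8 * ss * k3 * q * r^3 + 16 * ss * m * q * r^2 * r1 + 16 * ss^2 * a * b * q * r^4 + 3 * ss^2 * al * b * d^2 * r^6 - ss^2 * al * b * p^2 * r^4 + ss^2 * al * b * q^2 * r^4 - ss^2 * al * b^3 * r^6 + 2 * ss^2 * al * d * p * q * r^4 + 2 * ss^2 * b * be * p * q * r^4 - 16 * ss^2 * b * p * r^3 * r1 + 3 * ss^2 * b^2 * be * d * r^6 + 24 * ss^2 * be * d * m^2 * r^4 + ss^2 * be * d * p^2 * r^4 + 7 * ss^2 * be * d * q^2 * r^4 + 8 * ss^2 * be * d * r^4 * r1^2 + 7 * ss^2 * be * d^3 * r^6 + 16 * ss^2 * be * m * q * r^3 * r1 - 16 * ss^2 * d * ga * m * q * r^4 - 8 * ss^2 * d * k2 * r^4 + 32 * ss^2 * d * q * r^3 * r1 - 8 * ss^2 * d^2 * ga * r^5 * r1 + 32 * ss^2 *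 d^2 * m * r^4 - 8 * ss^2 * ga * m^2 * r^3 * r1 - 24 * ss^2 * ga * q^2 * r^3 * r1 - 8 * ss^2 * ga * r^3 * r1^3 + 8 * ss^2 * h3 * q * r^4 + 8 * ss^2 * k3 * r^3 * r1 + 8 * ss^2 * m * r^2 * r1^2 - 8 * ss^2 * m * r^3 * r2 + 16 * ss^3 * a * b * r^4 * r1 + 16 * ss^3 * be * d * q * r^4 * r1 + 24 * ss^3 * be * d^2 * m * r^5 + 8 * ss^3 * be * m * r^3 * r1^2 - 16 * ss^3 * d * ga * m * r^4 * r1 + 24 * ss^3 * d * r^3 * r1^2 - 8 * ss^3 * d * r^4 * r2 - 8 * ss^3 * d^2 * ga * q * r^5 + 16 * ss^3 * d^3 * r^5 - 24 * ss^3 * ga * q * r^3 * r1^2 + 8 * ss^3 * h3 * r^4 * r1 + 8 * ss^4 * be * d * r^4 * r1^2 + 8 * ss^4 * be * d^3 * r^6 - 8 * ss^4 * d^2 * ga * r^5 * r1 - 8 * ss^4 * ga * r^3 * r1^3 + 8 * a * b * q * r^4 - 8 * a * d * p * r^4 + 3 * al * b * d^2 * r^6 + 12 * al * b * m^2 * r^4 + 3 * al * b * p^2 * r^4 + al * b * q^2 * r^4 + 4 * al * b * r^4 * r1^2 + 3 * al * b^3 * r^6 + 2 * al * d * p * q * r^4 + 8 * al * m * p * r^3 * r1 + 2 * b * be * p * q * r^4 - 8 * b * ga * m * p * r^4 - 4 * b * k1 * r^4 + 8 * b * p * r^3 * r1 + 3 * b^2 * be * d * r^6 - 4 * b^2 *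 ga * r^5 * r1 + 16 * b^2 * m * r^4 + 12 * be * d * m^2 * r^4 + be * d * p^2 * r^4 + 3 * be * d * q^2 * r^4 + 4 * be * d * r^4 * r1^2 + 3 * be * d^3 * r^6 + 8 * be * m * q * r^3 * r1 - 8 * d * ga * m * q * r^4 - 4 * d * k2 * r^4 + 8 * d * q * r^3 * r1 - 4 * d^2 * ga * r^5 * r1 + 16 * d^2 * m * r^4 + 4 * g3 * p * r^4 - 8 * ga * m^2 * r^3 * r1 - 12 * ga * p^2 * r^3 * r1 - 12 * ga * q^2 * r^3 * r1 - 8 * ga * r^3 * r1^3 + 4 * h3 * q * r^4 + 8 * k3 * r^3 * r1 + 8 * m * p^2 * r^2 + 8 * m * q^2 * r^2 + 8 * m * r^2 * r1^2 - 8 * m * r^3 * r2 + 8 * m^3 * r^2).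

Definition Xs_f p q m a b d r r1 cc ss :=
  V3 (p + r1*cc - r*a*ss) (q + r1*ss + r*a*cc) (m + r*(b*cc+d*ss)).
Definition Xt_f r cc ss := V3 (-r*ss) (r*cc) 0.
Definition Xss_f a b d g2 g3 h3 k1 k2 k3 r r1 r2 cc ss :=
  V3 (k1 + r2*cc + 2*r1*(-a*ss) + r*(cc*(-(a^2+b^2)) + ss*(-2*b*d - g2)))
     (k2 + r2*ss + 2*r1*(a*cc) + r*(cc*g2 + ss*(-(a^2+d^2))))
     (k3 + 2*r1*(b*cc+d*ss) + r*(cc*g3 + ss*h3)).
Definition Xst_f a b d r r1 cc ss :=
  V3 (-r1*ss + r*(-a*cc)) (r1*cc + r*(-a*ss)) (r*(-b*ss + d*cc)).
Definition Xtt_f r cc ss := V3 (-r*cc) (-r*ss) 0.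

Lemma Pf_harm p q m a b d g2 g3 h3 k1 k2 k3 r r1 r2 al be ga cc ss :
  8 * PG (Xs_f p q m a b d r r1 cc ss) (Xt_f r cc ss) (Xss_f a b d g2 g3 h3 k1 k2 k3 r r1 r2 cc ss)
         (Xst_f a b d r r1 cc ss) (Xtt_f r cc ss) (V3 al be ga)
  = tpoly (hA0 p q m a b d g2 g3 h3 k1 k2 k3 r r1 r2 al be ga)
          (hA1 p q m a b d g2 g3 h3 k1 k2 k3 r r1 r2 al be ga)
          (hB1 p q m a b d g2 g3 h3 k1 k2 k3 r r1 r2 al be ga)
          (hA2 p q m a b d g2 g3 h3 k1 k2 k3 r r1 r2 al be ga)
          (hB2 p q m a b d g2 g3 h3 k1 k2 k3 r r1 r2 al be ga)
          (hA3 p q m a b d g2 g3 h3 k1 k2 k3 r r1 r2 al be ga)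
          (hB3 p q m a b d g2 g3 h3 k1 k2 k3 r r1 r2 al be ga)
          (hA4 p q m a b d g2 g3 h3 k1 k2 k3 r r1 r2 al be ga)
          (hB4 p q m a b d g2 g3 h3 k1 k2 k3 r r1 r2 al be ga) cc ss
    + (cc^2 + ss^2 - 1) * hQ p q m a b d g2 g3 h3 k1 k2 k3 r r1 r2 al be ga cc ss.
Proof.
  unfold PG, Xs_f, Xt_f, Xss_f, Xst_f, Xtt_f, vdot, vcross, tpoly, hA0, hA1, hB1, hA2, hB2, hA3, hB3, hA4, hB4, hQ; simpl.
  ring.
Qed.


Lemma H4_form p q m a b d g2 g3 h3 k1 k2 k3 r r1 r2 al be ga :
  let X1 := al * b - be * d in let Y1 := al * d + be * b in
  let Qre := p^2 - q^2 + r^2 * (b^2 - d^2) in let Qim := 2 * p * q + 2 * r^2 * b * d in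
  hA4 p q m a b d g2 g3 h3 k1 k2 k3 r r1 r2 al be ga = r^4 * (X1 * Qre - Y1 * Qim) /\
  hB4 p q m a b d g2 g3 h3 k1 k2 k3 r r1 r2 al be ga = r^4 * (X1 * Qim + Y1 * Qre).
Proof. simpl; unfold hA4, hB4; split; ring. Qed.

Lemma H3_form sg p q m a b d g2 g3 h3 k1 k2 k3 r r1 r2 al be ga :
  (sg = 1 \/ sg = -1) -> p = - sg * r * d -> q = sg * r * b ->
  let X := al * (b^2 - d^2) - 2 * be * b * d in let Y := 2 * al * b * d + be * (b^2 - d^2) in
  hA3 p q m a b d g2 g3 h3 k1 k2 k3 r r1 r2 al be ga = 4 * r^5 * (m * X - sg * r1 * Y) /\
  hB3 p q m a b d g2 g3 h3 k1 k2 k3 r r1 r2 al be ga = 4 * r^5 * (m * Y + sg * r1 * X).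
Proof. intros [-> | ->] -> ->; simpl; unfold hA3, hB3; split; ring. Qed.

Lemma H2_form sg a b d g2 g3 h3 r al be ga :
  (sg = 1 \/ sg = -1) ->
  hA2 (- sg * r * d) (sg * r * b) 0 a b d g2 g3 h3 (- sg * r * (2*a*b + h3)) (- sg * r * (2*a*d - g3)) 0 r 0 0 al be ga
   = 4 * r^6 * (b^2 + d^2) * (al * b - be * d) /\
  hB2 (- sg * r * d) (sg * r * b) 0 a b d g2 g3 h3 (- sg * r * (2*a*b + h3)) (- sg * r * (2*a*d - g3)) 0 r 0 0 al be ga
   = 4 * r^6 * (b^2 + d^2) * (al * d + be * b).
Proof. intros [-> | ->]; unfold hA2, hB2; split; ring. Qed.

Lemma sumsq0 x y : x ^ 2 + y ^ 2 = 0 -> x = 0 /\ y = 0.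
Proof. intros H. split; nra. Qed.

Lemma alg1 p q m a b d g2 g3 h3 k1 k2 k3 r r1 r2 al be ga :
  0 < r -> 0 < b ^ 2 + d ^ 2 -> 0 < al ^ 2 + be ^ 2 ->
  hA4 p q m a b d g2 g3 h3 k1 k2 k3 r r1 r2 al be ga = 0 ->
  hB4 p q m a b d g2 g3 h3 k1 k2 k3 r r1 r2 al be ga = 0 ->
  hA3 p q m a b d g2 g3 h3 k1 k2 k3 r r1 r2 al be ga = 0 ->
  hB3 p q m a b d g2 g3 h3 k1 k2 k3 r r1 r2 al be ga = 0 ->
  m = 0 /\ r1 = 0 /\
  ((p + 1 * r * d) ^ 2 + (q - 1 * r * b) ^ 2 = 0 \/ (p + -1 * r * d) ^ 2 + (q - -1 * r * b) ^ 2 = 0).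
Proof.
  intros Hr Hk Hw A4 B4 A3 B3.
  destruct (H4_form p q m a b d g2 g3 h3 k1 k2 k3 r r1 r2 al be ga) as [F4a F4b].
  simpl in F4a, F4b. rewrite A4 in F4a. rewrite B4 in F4b.
  assert (Hr4 : 0 < r ^ 4) by (apply pow_lt; auto).
  set (X1 := al * b - be * d) in *. set (Y1 := al * d + be * b) in *.
  set (Qre := p^2 - q^2 + r^2 * (b^2 - d^2)) in *. set (Qim := 2 * p * q + 2 * r^2 * b * d) in *.
  assert (E1 : X1 * Qre - Y1 * Qim = 0).
  { apply (Rmult_eq_reg_l (r ^ 4)); [|lra]. rewrite Rmult_0_r. symmetry. exact F4a. }
  assert (E2 : X1 * Qim + Y1 * Qre = 0).
  { apply (Rmult_eq_reg_l (r ^ 4)); [|lra]. rewrite Rmult_0_r. symmetry. exact F4b. }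
  assert (XY : X1 ^ 2 + Y1 ^ 2 = (al ^ 2 + be ^ 2) * (b ^ 2 + d ^ 2)) by (unfold X1, Y1; ring).
  assert (Hxy : 0 < X1 ^ 2 + Y1 ^ 2) by (rewrite XY; apply Rmult_lt_0_compat; auto).
  assert (Q0 : Qre ^ 2 + Qim ^ 2 = 0).
  { assert (Id : (X1 ^ 2 + Y1 ^ 2) * (Qre ^ 2 + Qim ^ 2) = (X1 * Qre - Y1 * Qim) ^ 2 + (X1 * Qim + Y1 * Qre) ^ 2) by ring.
    rewrite E1, E2 in Id. assert (Hq : 0 <= Qre ^ 2 + Qim ^ 2) by nra. nra. }
  assert (EE : ((p + 1 * r * d) ^ 2 + (q - 1 * r * b) ^ 2) * ((p + -1 * r * d) ^ 2 + (q - -1 * r * b) ^ 2) = 0).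
  { rewrite <- Q0. unfold Qre, Qim. ring. }
  assert (Hsg : forall sg, (sg = 1 \/ sg = -1) -> (p + sg * r * d) ^ 2 + (q - sg * r * b) ^ 2 = 0 -> m = 0 /\ r1 = 0).
  { intros sg Hsg Es. destruct (sumsq0 _ _ Es) as [Ep Eq].
    assert (Hp : p = - sg * r * d) by lra. assert (Hq : q = sg * r * b) by lra.
    destruct (H3_form sg p q m a b d g2 g3 h3 k1 k2 k3 r r1 r2 al be ga Hsg Hp Hq) as [G1 G2].
    simpl in G1, G2. rewrite A3 in G1. rewrite B3 in G2.
    set (X := al * (b^2 - d^2) - 2 * be * b * d) in *. set (Y := 2 * al * b * d + be * (b^2 - d^2)) in *.
    assert (Hr5 : 0 < 4 * r ^ 5) by (assert (0 < r ^ 5) by (apply pow_lt; auto); lra).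
    assert (M1 : m * X - sg * r1 * Y = 0).
    { apply (Rmult_eq_reg_l (4 * r ^ 5)); [|lra]. rewrite Rmult_0_r. symmetry. exact G1. }
    assert (M2 : m * Y + sg * r1 * X = 0).
    { apply (Rmult_eq_reg_l (4 * r ^ 5)); [|lra]. rewrite Rmult_0_r. symmetry. exact G2. }
    assert (XY2 : X ^ 2 + Y ^ 2 = (al ^ 2 + be ^ 2) * (b ^ 2 + d ^ 2) ^ 2) by (unfold X, Y; ring).
    assert (Hxy2 : 0 < X ^ 2 + Y ^ 2) by (rewrite XY2; apply Rmult_lt_0_compat; [auto| apply pow_lt; auto]).
    assert (sg2 : sg * sg = 1) by (destruct Hsg; subst; ring).
    assert (Id : (m ^ 2 + r1 ^ 2) * (X ^ 2 + Y ^ 2) = (m * X - sg * r1 * Y) ^ 2 + (m * Y + sg * r1 * X) ^ 2).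
    { replace (r1 ^ 2) with (sg * sg * r1 ^ 2) by (rewrite sg2; ring). ring. }
    rewrite M1, M2 in Id.
    assert (Hm : m ^ 2 + r1 ^ 2 = 0).
    { assert (0 <= m ^ 2 + r1 ^ 2) by nra. nra. }
    apply sumsq0 in Hm. exact Hm. }
  destruct (Rmult_integral _ _ EE) as [Z|Z].
  - destruct (Hsg 1 (or_introl eq_refl) Z). auto.
  - destruct (Hsg (-1) (or_intror eq_refl) Z). auto.
Qed.

Lemma alg2 sg a b d g2 g3 h3 r al be ga :
  (sg = 1 \/ sg = -1) -> 0 < r -> 0 < b ^ 2 + d ^ 2 -> 0 < al ^ 2 + be ^ 2 ->
  hA2 (- sg * r * d) (sg * r * b) 0 a b d g2 g3 h3 (- sg * r * (2*a*b + h3)) (- sg * r * (2*a*d - g3)) 0 r 0 0 al be ga = 0 ->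
  hB2 (- sg * r * d) (sg * r * b) 0 a b d g2 g3 h3 (- sg * r * (2*a*b + h3)) (- sg * r * (2*a*d - g3)) 0 r 0 0 al be ga = 0 ->
  False.
Proof.
  intros Hsg Hr Hk Hw A B.
  destruct (H2_form sg a b d g2 g3 h3 r al be ga Hsg) as [F1 F2].
  rewrite A in F1. rewrite B in F2.
  assert (Hc : 0 < 4 * r ^ 6 * (b ^ 2 + d ^ 2)) by (assert (0 < r ^ 6) by (apply pow_lt; auto); nra).
  assert (M1 : al * b - be * d = 0).
  { apply (Rmult_eq_reg_l (4 * r ^ 6 * (b ^ 2 + d ^ 2))); [|lra]. rewrite Rmult_0_r. symmetry. exact F1. }
  assert (M2 : al * d + be * b = 0).
  { apply (Rmult_eq_reg_l (4 * r ^ 6 * (b ^ 2 + d ^ 2))); [|lra]. rewrite Rmult_0_r. symmetry. exact F2. }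
  assert (Id : (al ^ 2 + be ^ 2) * (b ^ 2 + d ^ 2) = (al * b - be * d) ^ 2 + (al * d + be * b) ^ 2) by ring.
  rewrite M1, M2 in Id. nra.
Qed.


Ltac vring := apply vec_eq; unfold vadd, vscal, vcross, vdot, vzero; simpl; ring.

Lemma hd3_eq f x d d' : has_deriv3 f x d -> d = d' -> has_deriv3 f x d'.
Proof. intros H ->; exact H. Qed.

Lemma hd3_ext_loc (f g : R -> vec3) x d a b : a < x < b ->
  (forall y, a < y < b -> f y = g y) -> has_deriv3 g x d -> has_deriv3 f x d.
Proof.
  intros Hx He [H1 [H2 H3]]; repeat split;
  [ apply (dpl_ext_loc _ (fun y => vx (g y)) x _ a b Hx)
  | apply (dpl_ext_loc _ (fun y => vy (g y)) x _ a b Hx)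
  | apply (dpl_ext_loc _ (fun y => vz (g y)) x _ a b Hx)]; auto;
  intros y Hy; rewrite He; auto.
Qed.

Lemma hd3_unique f x d1 d2 : has_deriv3 f x d1 -> has_deriv3 f x d2 -> d1 = d2.
Proof.
  intros [A1 [A2 A3]] [B1 [B2 B3]]. apply vec_eq; eapply uniqueness_limite; eauto.
Qed.

Lemma hd3_const w x : has_deriv3 (fun _ => w) x vzero.
Proof. repeat split; apply dpl_const. Qed.

Lemma hd3_add f g x df dg : has_deriv3 f x df -> has_deriv3 g x dg ->
  has_deriv3 (fun y => vadd (f y) (g y)) x (vadd df dg).
Proof.
  intros [A1 [A2 A3]] [B1 [B2 B3]]; repeat split; simpl; apply dpl_plus; auto.
Qed.

Lemma hd3_scal k f x dk df : dpl k x dk -> has_deriv3 f x df ->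
  has_deriv3 (fun y => vscal (k y) (f y)) x (vadd (vscal dk (f x)) (vscal (k x) df)).
Proof.
  intros Hk [A1 [A2 A3]]; repeat split; simpl; apply dpl_mult; auto.
Qed.

Lemma hd3_cross f g x df dg : has_deriv3 f x df -> has_deriv3 g x dg ->
  has_deriv3 (fun y => vcross (f y) (g y)) x (vadd (vcross df (g x)) (vcross (f x) dg)).
Proof.
  intros [A1 [A2 A3]] [B1 [B2 B3]]; repeat split; simpl;
  (eapply dpl_eq; [apply dpl_minus; apply dpl_mult; eauto|]); unfold vcross; simpl; ring.
Qed.

Lemma dpl_dot f g x df dg : has_deriv3 f x df -> has_deriv3 g x dg ->
  dpl (fun y => vdot (f y) (g y)) x (vdot df (g x) + vdot (f x) dg).
Proof.
  intros [A1 [A2 A3]] [B1 [B2 B3]]. unfold vdot.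
  eapply dpl_eq; [repeat apply dpl_plus; apply dpl_mult; eauto|]. cbv beta. ring.
Qed.

Lemma continuity_of_dpl f x l : dpl f x l -> continuity_pt f x.
Proof. intros H. apply derivable_continuous_pt. exists l. exact H. Qed.

Lemma pos_nbhd f x : continuity_pt f x -> 0 < f x ->
  exists del, 0 < del /\ forall y, Rabs (y - x) < del -> 0 < f y.
Proof.
  intros Hc Hp. destruct (Hc (f x / 2)) as [del [Hd H]]; [lra|].
  exists del; split; auto. intros y Hy.
  destruct (Req_dec y x) as [->|Hne]; auto.
  assert (Hdist : R_dist (f y) (f x) < f x / 2).
  { apply H. split; [unfold D_x, no_cond; auto | exact Hy]. }
  unfold R_dist in Hdist. apply Rabs_def2 in Hdist. lra.
Qed.


Lemma vdot_pos w : w <> vzero -> 0 < vdot w w.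
Proof.
  destruct w as [x y z]; unfold vdot, vzero; simpl; intros Hn.
  destruct (Req_dec x 0) as [->|Hx]; [destruct (Req_dec y 0) as [->|Hy];
    [destruct (Req_dec z 0) as [->|Hz]; [exfalso; apply Hn; reflexivity|]|]|]; nra.
Qed.

Lemma mc_PG Xs Xt Xss Xst Xtt v :
  vcross Xs Xt <> vzero ->
  mean_curv Xs Xt Xss Xst Xtt = / 2 * vdot (unit_normal Xs Xt) v ->
  PG Xs Xt Xss Xst Xtt v = 0.
Proof.
  intros Hn H. unfold mean_curv, unit_normal in H. unfold PG.
  set (W := vcross Xs Xt) in *.
  assert (HW : 0 < vdot W W) by (apply vdot_pos; auto).
  set (L := vnorm W) in *.
  assert (HL : 0 < L) by (unfold L, vnorm; apply sqrt_lt_R0; auto).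
  assert (HLL : L * L = vdot W W) by (unfold L, vnorm; apply sqrt_sqrt; lra).
  assert (Lag : vdot Xs Xs * vdot Xt Xt - vdot Xs Xt * vdot Xs Xt = vdot W W)
    by (unfold W; destruct Xs, Xt; unfold vdot, vcross; simpl; ring).
  assert (sc : forall k Y, vdot Y (vscal k W) = k * vdot Y W)
    by (intros; destruct Y, W; unfold vdot, vscal; simpl; ring).
  assert (sc2 : forall k Y, vdot (vscal k W) Y = k * vdot W Y)
    by (intros; destruct Y, W; unfold vdot, vscal; simpl; ring).
  cbv zeta in H. rewrite !sc, sc2, Lag in H.
  set (A := vdot Xss W) in *. set (B := vdot Xst W) in *. set (Cc := vdot Xtt W) in *.
  set (E := vdot Xs Xs) in *. set (F := vdot Xs Xt) in *. set (G := vdot Xt Xt) in *.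
  set (V := vdot W v) in *. set (WW := vdot W W) in *.
  assert (e1 : (/ L * A * G - 2 * (/ L * B) * F + / L * Cc * E) / (2 * WW)
               = (G * A - 2 * F * B + E * Cc) / (2 * L * WW)) by (field; lra).
  rewrite e1 in H.
  assert (K : G * A - 2 * F * B + E * Cc = (G * A - 2 * F * B + E * Cc) / (2 * L * WW) * (2 * L * WW))
    by (field; lra).
  rewrite H in K. rewrite K. field. lra.
Qed.

Lemma smooth_derivs a b f : smooth_on a b f ->
  exists f1 f2 : R -> R, forall x, a < x < b -> dpl f x (f1 x) /\ dpl f1 x (f2 x).
Proof.
  intros [D [H0 H]]. exists (D 1%nat), (D 2%nat). intros x Hx. split.
  - pose proof (H 0%nat x Hx) as Hd. rewrite H0 in Hd. exact Hd.
  - exact (H 1%nat x Hx).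
Qed.

Lemma smooth3_derivs a b f : smooth3_on a b f ->
  exists f1 f2 : R -> vec3, forall x, a < x < b -> has_deriv3 f x (f1 x) /\ has_deriv3 f1 x (f2 x).
Proof.
  intros [Hx [Hy Hz]].
  destruct (smooth_derivs _ _ _ Hx) as [x1 [x2 Hx']].
  destruct (smooth_derivs _ _ _ Hy) as [y1 [y2 Hy']].
  destruct (smooth_derivs _ _ _ Hz) as [z1 [z2 Hz']].
  exists (fun x => V3 (x1 x) (y1 x) (z1 x)), (fun x => V3 (x2 x) (y2 x) (z2 x)).
  intros x H. destruct (Hx' x H), (Hy' x H), (Hz' x H).
  split; repeat split; simpl; auto.
Qed.

Lemma dpl_const_loc f x l a b k : a < x < b -> (forall y, a < y < b -> f y = k) -> dpl f x l -> l = 0.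
Proof.
  intros Hx H Hf. apply (uniqueness_limite f x); auto.
  apply (dpl_ext_loc f (fun _ => k) x 0 a b Hx H). apply dpl_const.
Qed.

Lemma vdot_comm u w : vdot u w = vdot w u.
Proof. unfold vdot; ring. Qed.


Section Main.
Variables (v : vec3) (s0 s1 t0 t1 : R) (c e1 e2 : R -> vec3) (r : R -> R)
  (c1 c2 e11 e12 e21 e22 : R -> vec3) (r1 r2 : R -> R) (Xs Xt Xss Xst Xtt : R -> R -> vec3).
Hypothesis Hv : v <> vzero.
Hypothesis Hs01 : s0 < s1.
Hypothesis Ht01 : t0 < t1.
Hypothesis Hc : forall x, s0 < x < s1 -> has_deriv3 c x (c1 x) /\ has_deriv3 c1 x (c2 x).
Hypothesis He1 : forall x, s0 < x < s1 -> has_deriv3 e1 x (e11 x) /\ has_deriv3 e11 x (e12 x).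
Hypothesis He2 : forall x, s0 < x < s1 -> has_deriv3 e2 x (e21 x) /\ has_deriv3 e21 x (e22 x).
Hypothesis Hr : forall x, s0 < x < s1 -> dpl r x (r1 x) /\ dpl r1 x (r2 x).
Hypothesis Hon : forall x, s0 < x < s1 ->
  0 < r x /\ vdot (e1 x) (e1 x) = 1 /\ vdot (e2 x) (e2 x) = 1 /\ vdot (e1 x) (e2 x) = 0.
Hypothesis HX : forall s t, s0 < s < s1 -> t0 < t < t1 ->
      has_deriv3 (fun u => cyclic_param c e1 e2 r u t) s (Xs s t) /\
      has_deriv3 (fun u => cyclic_param c e1 e2 r s u) t (Xt s t) /\
      has_deriv3 (fun u => Xs u t) s (Xss s t) /\
      has_deriv3 (fun u => Xs s u) t (Xst s t) /\
      has_deriv3 (fun u => Xt s u) t (Xtt s t) /\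
      vcross (Xs s t) (Xt s t) <> vzero /\
      mean_curv (Xs s t) (Xt s t) (Xss s t) (Xst s t) (Xtt s t)
        = / 2 * vdot (unit_normal (Xs s t) (Xt s t)) v.

Lemma R1 x : s0 < x < s1 -> vdot (e1 x) (e11 x) = 0.
Proof.
  intros Hx. destruct (He1 x Hx) as [D _].
  pose proof (dpl_dot _ _ _ _ _ D D) as Hd.
  pose proof (dpl_const_loc _ _ _ s0 s1 1 Hx (fun y Hy => proj1 (proj2 (Hon y Hy))) Hd) as E.
  rewrite vdot_comm in E. lra.
Qed.

Lemma R2 x : s0 < x < s1 -> vdot (e2 x) (e21 x) = 0.
Proof.
  intros Hx. destruct (He2 x Hx) as [D _].
  pose proof (dpl_dot _ _ _ _ _ D D) as Hd.
  pose proof (dpl_const_loc _ _ _ s0 s1 1 Hx (fun y Hy => proj1 (proj2 (proj2 (Hon y Hy)))) Hd) as E.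
  rewrite vdot_comm in E. lra.
Qed.

Lemma R3 x : s0 < x < s1 -> vdot (e11 x) (e2 x) + vdot (e1 x) (e21 x) = 0.
Proof.
  intros Hx. destruct (He1 x Hx) as [D1 _]. destruct (He2 x Hx) as [D2 _].
  pose proof (dpl_dot _ _ _ _ _ D1 D2) as Hd.
  exact (dpl_const_loc _ _ _ s0 s1 0 Hx (fun y Hy => proj2 (proj2 (proj2 (Hon y Hy)))) Hd).
Qed.

Lemma R4 x : s0 < x < s1 -> vdot (e11 x) (e11 x) + vdot (e1 x) (e12 x) = 0.
Proof.
  intros Hx. destruct (He1 x Hx) as [D1 D2].
  pose proof (dpl_dot _ _ _ _ _ D1 D2) as Hd.
  exact (dpl_const_loc _ _ _ s0 s1 0 Hx (fun y Hy => R1 y Hy) Hd).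
Qed.

Lemma R5 x : s0 < x < s1 -> vdot (e21 x) (e21 x) + vdot (e2 x) (e22 x) = 0.
Proof.
  intros Hx. destruct (He2 x Hx) as [D1 D2].
  pose proof (dpl_dot _ _ _ _ _ D1 D2) as Hd.
  exact (dpl_const_loc _ _ _ s0 s1 0 Hx (fun y Hy => R2 y Hy) Hd).
Qed.

Lemma R6 x : s0 < x < s1 ->
  vdot (e12 x) (e2 x) + 2 * vdot (e11 x) (e21 x) + vdot (e1 x) (e22 x) = 0.
Proof.
  intros Hx. destruct (He1 x Hx) as [A1 A2]. destruct (He2 x Hx) as [B1 B2].
  pose proof (dpl_plus _ _ _ _ _ (dpl_dot _ _ _ _ _ A2 B1) (dpl_dot _ _ _ _ _ A1 B2)) as Hd.
  pose proof (dpl_const_loc _ _ _ s0 s1 0 Hx (fun y Hy => R3 y Hy) Hd) as E.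
  lra.
Qed.

Definition nv x := vcross (e1 x) (e2 x).
Definition pp x := vdot (c1 x) (e1 x).
Definition qq x := vdot (c1 x) (e2 x).
Definition mm x := vdot (c1 x) (nv x).
Definition aa x := vdot (e11 x) (e2 x).
Definition bb x := vdot (e11 x) (nv x).
Definition dd x := vdot (e21 x) (nv x).
Definition gg2 x := vdot (e12 x) (e2 x).
Definition gg3 x := vdot (e12 x) (nv x).
Definition hh3 x := vdot (e22 x) (nv x).
Definition kk1 x := vdot (c2 x) (e1 x).
Definition kk2 x := vdot (c2 x) (e2 x).
Definition kk3 x := vdot (c2 x) (nv x).
Definition al x := vdot v (e1 x).
Definition be x := vdot v (e2 x).
Definition ga x := vdot v (nv x).

Notation Frs x := (Fr (e1 x) (e2 x)).

Lemma cmp x w : s0 < x < s1 -> w = Frs x (V3 (vdot w (e1 x)) (vdot w (e2 x)) (vdot w (nv x))).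
Proof. intros Hx. destruct (Hon x Hx) as [_ [A [B C]]]. apply complete; auto. Qed.

Lemma F_c1 x : s0 < x < s1 -> c1 x = Frs x (V3 (pp x) (qq x) (mm x)).
Proof. intros Hx; apply cmp; auto. Qed.
Lemma F_c2 x : s0 < x < s1 -> c2 x = Frs x (V3 (kk1 x) (kk2 x) (kk3 x)).
Proof. intros Hx; apply cmp; auto. Qed.
Lemma F_v x : s0 < x < s1 -> v = Frs x (V3 (al x) (be x) (ga x)).
Proof. intros Hx. rewrite (cmp x v) at 1 by auto. reflexivity. Qed.
Lemma F_e11 x : s0 < x < s1 -> e11 x = Frs x (V3 0 (aa x) (bb x)).
Proof. intros Hx. rewrite (cmp x (e11 x)) at 1 by auto. rewrite vdot_comm, R1 by auto. reflexivity. Qed.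
Lemma F_e21 x : s0 < x < s1 -> e21 x = Frs x (V3 (- aa x) 0 (dd x)).
Proof.
  intros Hx. rewrite (cmp x (e21 x)) at 1 by auto. rewrite (vdot_comm (e21 x) (e2 x)), R2 by auto.
  replace (vdot (e21 x) (e1 x)) with (- aa x); [reflexivity|].
  unfold aa. pose proof (R3 x Hx). rewrite (vdot_comm (e21 x)). lra.
Qed.

Lemma dotF x u w : s0 < x < s1 -> vdot (Frs x u) (Frs x w) = vdot u w.
Proof. intros Hx. destruct (Hon x Hx) as [_ [A [B C]]]. apply dot_Fr; auto. Qed.
Lemma crossF x u w : s0 < x < s1 -> vcross (Frs x u) (Frs x w) = Frs x (vcross u w).
Proof. intros Hx. destruct (Hon x Hx) as [_ [A [B C]]]. apply cross_Fr; auto. Qed.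

Lemma F_e12 x : s0 < x < s1 -> e12 x = Frs x (V3 (- (aa x ^ 2 + bb x ^ 2)) (gg2 x) (gg3 x)).
Proof.
  intros Hx. rewrite (cmp x (e12 x)) at 1 by auto.
  replace (vdot (e12 x) (e1 x)) with (- (aa x ^ 2 + bb x ^ 2)); [reflexivity|].
  pose proof (R4 x Hx) as E. rewrite (F_e11 x Hx) in E at 1 2. rewrite dotF in E by auto.
  unfold vdot at 1 in E; simpl in E. rewrite vdot_comm. lra.
Qed.

Lemma F_e22 x : s0 < x < s1 ->
  e22 x = Frs x (V3 (- 2 * bb x * dd x - gg2 x) (- (aa x ^ 2 + dd x ^ 2)) (hh3 x)).
Proof.
  intros Hx. rewrite (cmp x (e22 x)) at 1 by auto.
  assert (A : vdot (e22 x) (e2 x) = - (aa x ^ 2 + dd x ^ 2)).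
  { pose proof (R5 x Hx) as E. rewrite (F_e21 x Hx) in E at 1 2. rewrite dotF in E by auto.
    unfold vdot at 1 in E; simpl in E. rewrite vdot_comm. lra. }
  assert (B : vdot (e22 x) (e1 x) = - 2 * bb x * dd x - gg2 x).
  { pose proof (R6 x Hx) as E. rewrite (F_e11 x Hx), (F_e21 x Hx) in E. rewrite dotF in E by auto.
    unfold vdot at 2 in E; simpl in E. rewrite vdot_comm. unfold gg2. lra. }
  rewrite A, B. reflexivity.
Qed.

Definition uvec t x := vadd (vscal (cos t) (e1 x)) (vscal (sin t) (e2 x)).
Definition U1 t x := vadd (vscal (cos t) (e11 x)) (vscal (sin t) (e21 x)).
Definition U2 t x := vadd (vscal (cos t) (e12 x)) (vscal (sin t) (e22 x)).
Definition wvec t x := vadd (vscal (- sin t) (e1 x)) (vscal (cos t) (e2 x)).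
Definition W1 t x := vadd (vscal (- sin t) (e11 x)) (vscal (cos t) (e21 x)).
Definition XsG x t := vadd (c1 x) (vadd (vscal (r1 x) (uvec t x)) (vscal (r x) (U1 t x))).
Definition XtG x t := vscal (r x) (wvec t x).
Definition XssG x t := vadd (c2 x) (vadd (vscal (r2 x) (uvec t x))
   (vadd (vscal (2 * r1 x) (U1 t x)) (vscal (r x) (U2 t x)))).
Definition XstG x t := vadd (vscal (r1 x) (wvec t x)) (vscal (r x) (W1 t x)).
Definition XttG x t := vscal (r x) (vadd (vscal (- cos t) (e1 x)) (vscal (- sin t) (e2 x))).

Lemma D_uvec t x : s0 < x < s1 -> has_deriv3 (fun y => uvec t y) x (U1 t x).
Proof.
  intros Hx. destruct (He1 x Hx) as [A _]. destruct (He2 x Hx) as [B _].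
  eapply hd3_eq; [apply hd3_add; apply hd3_scal; [apply dpl_const|exact A|apply dpl_const|exact B]|].
  unfold U1; vring.
Qed.

Lemma D_U1 t x : s0 < x < s1 -> has_deriv3 (fun y => U1 t y) x (U2 t x).
Proof.
  intros Hx. destruct (He1 x Hx) as [_ A]. destruct (He2 x Hx) as [_ B].
  eapply hd3_eq; [apply hd3_add; apply hd3_scal; [apply dpl_const|exact A|apply dpl_const|exact B]|].
  unfold U2; vring.
Qed.

Lemma D_X_s t x : s0 < x < s1 -> has_deriv3 (fun y => cyclic_param c e1 e2 r y t) x (XsG x t).
Proof.
  intros Hx. destruct (Hc x Hx) as [A _]. destruct (Hr x Hx) as [B _].
  eapply hd3_eq; [apply hd3_add; [exact A| apply hd3_scal; [exact B| apply (D_uvec t x Hx)]]|].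
  unfold XsG, uvec; vring.
Qed.

Lemma D_XsG_s t x : s0 < x < s1 -> has_deriv3 (fun y => XsG y t) x (XssG x t).
Proof.
  intros Hx. destruct (Hc x Hx) as [_ A]. destruct (Hr x Hx) as [B1 B2].
  eapply hd3_eq; [apply hd3_add; [exact A| apply hd3_add; apply hd3_scal;
     [exact B2| apply (D_uvec t x Hx)| exact B1| apply (D_U1 t x Hx)]]|].
  unfold XssG, uvec, U1; vring.
Qed.

Lemma dpl_cos' t : dpl cos t (- sin t).
Proof. apply derivable_pt_lim_cos. Qed.
Lemma dpl_sin' t : dpl sin t (cos t).
Proof. apply derivable_pt_lim_sin. Qed.

Lemma D_X_t s t : has_deriv3 (fun y => cyclic_param c e1 e2 r s y) t (XtG s t).
Proof.
  eapply hd3_eq; [apply hd3_add; [apply hd3_const| apply hd3_scal; [apply dpl_const|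
    apply hd3_add; apply hd3_scal; [apply dpl_cos'|apply hd3_const|apply dpl_sin'|apply hd3_const]]]|].
  unfold XtG, wvec; vring.
Qed.

Lemma D_XsG_t s t : has_deriv3 (fun y => XsG s y) t (XstG s t).
Proof.
  unfold XsG, uvec, U1.
  eapply hd3_eq; [apply hd3_add; [apply hd3_const| apply hd3_add; apply hd3_scal; [apply dpl_const|
    apply hd3_add; apply hd3_scal; [apply dpl_cos'|apply hd3_const|apply dpl_sin'|apply hd3_const]
    |apply dpl_const|
    apply hd3_add; apply hd3_scal; [apply dpl_cos'|apply hd3_const|apply dpl_sin'|apply hd3_const]]]|].
  unfold XstG, wvec, W1; vring.
Qed.

Lemma D_XtG_t s t : has_deriv3 (fun y => XtG s y) t (XttG s t).
Proof.
  unfold XtG, wvec.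
  eapply hd3_eq; [apply hd3_scal; [apply dpl_const|
    apply hd3_add; apply hd3_scal; [apply dpl_opp; apply dpl_sin'|apply hd3_const|apply dpl_cos'|apply hd3_const]]|].
  unfold XttG; vring.
Qed.

Lemma Xs_eq s t : s0 < s < s1 -> t0 < t < t1 -> Xs s t = XsG s t.
Proof. intros Hs Ht. eapply hd3_unique; [apply (HX s t Hs Ht)| apply D_X_s; auto]. Qed.

Lemma Xt_eq s t : s0 < s < s1 -> t0 < t < t1 -> Xt s t = XtG s t.
Proof. intros Hs Ht. eapply hd3_unique; [apply (HX s t Hs Ht)| apply D_X_t]. Qed.

Lemma Xss_eq s t : s0 < s < s1 -> t0 < t < t1 -> Xss s t = XssG s t.
Proof.
  intros Hs Ht. eapply hd3_unique; [apply (HX s t Hs Ht)|].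
  apply (hd3_ext_loc _ (fun y => XsG y t) s _ s0 s1 Hs); [intros y Hy; apply Xs_eq; auto|].
  apply D_XsG_s; auto.
Qed.

Lemma Xst_eq s t : s0 < s < s1 -> t0 < t < t1 -> Xst s t = XstG s t.
Proof.
  intros Hs Ht. eapply hd3_unique; [apply (HX s t Hs Ht)|].
  apply (hd3_ext_loc _ (fun y => XsG s y) t _ t0 t1 Ht); [intros y Hy; apply Xs_eq; auto|].
  apply D_XsG_t.
Qed.

Lemma Xtt_eq s t : s0 < s < s1 -> t0 < t < t1 -> Xtt s t = XttG s t.
Proof.
  intros Hs Ht. eapply hd3_unique; [apply (HX s t Hs Ht)|].
  apply (hd3_ext_loc _ (fun y => XtG s y) t _ t0 t1 Ht); [intros y Hy; apply Xt_eq; auto|].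
  apply D_XtG_t.
Qed.

Lemma PG_zero s t : s0 < s < s1 -> t0 < t < t1 ->
  PG (XsG s t) (XtG s t) (XssG s t) (XstG s t) (XttG s t) v = 0.
Proof.
  intros Hs Ht. destruct (HX s t Hs Ht) as [_ [_ [_ [_ [_ [Hn Hm]]]]]].
  rewrite <- Xs_eq, <- Xt_eq, <- Xss_eq, <- Xst_eq, <- Xtt_eq by auto.
  apply mc_PG; auto.
Qed.

Lemma Fe1 x : Frs x (V3 1 0 0) = e1 x.
Proof. unfold Fr; simpl; generalize (e1 x) (e2 x); intros; vring. Qed.
Lemma Fe2 x : Frs x (V3 0 1 0) = e2 x.
Proof. unfold Fr; simpl; generalize (e1 x) (e2 x); intros; vring. Qed.
Lemma Fn x : Frs x (V3 0 0 1) = nv x.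
Proof. unfold Fr, nv; simpl; generalize (e1 x) (e2 x); intros; vring. Qed.

Lemma Fr_add x u w : vadd (Frs x u) (Frs x w) = Frs x (vadd u w).
Proof. unfold Fr; generalize (e1 x) (e2 x); intros; destruct u, w; vring. Qed.
Lemma Fr_scal x k u : vscal k (Frs x u) = Frs x (vscal k u).
Proof. unfold Fr; generalize (e1 x) (e2 x); intros; destruct u; vring. Qed.
Lemma Fr_zero x : Frs x (V3 0 0 0) = vzero.
Proof. unfold Fr; generalize (e1 x) (e2 x); intros; vring. Qed.
Lemma Fr_ext x u w : u = w -> Frs x u = Frs x w.
Proof. intros ->; reflexivity. Qed.

Lemma sc_e1 x k : vscal k (e1 x) = Frs x (V3 k 0 0).
Proof. unfold Fr; generalize (e1 x) (e2 x); intros; vring. Qed.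
Lemma sc_e2 x k : vscal k (e2 x) = Frs x (V3 0 k 0).
Proof. unfold Fr; generalize (e1 x) (e2 x); intros; vring. Qed.

Lemma frame_PG s t : s0 < s < s1 ->
  PG (XsG s t) (XtG s t) (XssG s t) (XstG s t) (XttG s t) v =
  PG (Xs_f (pp s) (qq s) (mm s) (aa s) (bb s) (dd s) (r s) (r1 s) (cos t) (sin t))
     (Xt_f (r s) (cos t) (sin t))
     (Xss_f (aa s) (bb s) (dd s) (gg2 s) (gg3 s) (hh3 s) (kk1 s) (kk2 s) (kk3 s) (r s) (r1 s) (r2 s) (cos t) (sin t))
     (Xst_f (aa s) (bb s) (dd s) (r s) (r1 s) (cos t) (sin t))
     (Xtt_f (r s) (cos t) (sin t)) (V3 (al s) (be s) (ga s)).
Proof.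
  intros Hs. destruct (Hon s Hs) as [_ [A [B C]]].
  rewrite <- (PG_Fr (e1 s) (e2 s) _ _ _ _ _ (V3 (al s) (be s) (ga s))) by auto. rewrite <- (F_v s Hs).
  unfold XsG, XtG, XssG, XstG, XttG, uvec, U1, U2, wvec, W1.
  rewrite (F_c1 s Hs), (F_c2 s Hs), (F_e11 s Hs), (F_e21 s Hs), (F_e12 s Hs), (F_e22 s Hs).
  rewrite !sc_e1, !sc_e2.
  repeat (rewrite Fr_scal || rewrite Fr_add).
  f_equal; apply Fr_ext; unfold Xs_f, Xt_f, Xss_f, Xst_f, Xtt_f; vring.
Qed.

Definition HC (h : R -> R -> R -> R -> R -> R -> R -> R -> R -> R -> R -> R -> R -> R -> R -> R -> R -> R -> R) s :=
  h (pp s) (qq s) (mm s) (aa s) (bb s) (dd s) (gg2 s) (gg3 s) (hh3 s) (kk1 s) (kk2 s) (kk3 s)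
    (r s) (r1 s) (r2 s) (al s) (be s) (ga s).

Lemma Harm s : s0 < s < s1 ->
  HC hA4 s = 0 /\ HC hB4 s = 0 /\ HC hA3 s = 0 /\ HC hB3 s = 0 /\ HC hA2 s = 0 /\ HC hB2 s = 0.
Proof.
  intros Hs.
  assert (T : forall t, t0 < t < t1 ->
    tpoly (HC hA0 s) (HC hA1 s) (HC hB1 s) (HC hA2 s) (HC hB2 s) (HC hA3 s) (HC hB3 s) (HC hA4 s) (HC hB4 s)
      (cos t) (sin t) = 0).
  { intros t Ht. pose proof (PG_zero s t Hs Ht) as Z. rewrite frame_PG in Z by auto.
    pose proof (Pf_harm (pp s) (qq s) (mm s) (aa s) (bb s) (dd s) (gg2 s) (gg3 s) (hh3 s)
       (kk1 s) (kk2 s) (kk3 s) (r s) (r1 s) (r2 s) (al s) (be s) (ga s) (cos t) (sin t)) as E.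
    rewrite Z in E. pose proof (sin2_cos2 t) as SC. unfold Rsqr in SC.
    replace (cos t ^ 2 + sin t ^ 2 - 1) with 0 in E by (simpl; lra).
    unfold HC. lra. }
  destruct (tpoly_all_zero _ _ _ _ _ _ _ _ _ t0 t1 Ht01 T) as [_ [_ [_ [A2 [B2 [A3 [B3 [A4 B4]]]]]]]].
  repeat split; auto.
Qed.

Lemma crossF_e2 x u : s0 < x < s1 -> vcross (Frs x u) (e2 x) = Frs x (vcross u (V3 0 1 0)).
Proof. intros Hx. rewrite <- crossF by auto. rewrite Fe2. reflexivity. Qed.
Lemma crosse1_F x u : s0 < x < s1 -> vcross (e1 x) (Frs x u) = Frs x (vcross (V3 1 0 0) u).
Proof. intros Hx. rewrite <- crossF by auto. rewrite Fe1. reflexivity. Qed.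
Lemma crossn_F x u : s0 < x < s1 -> vcross (nv x) (Frs x u) = Frs x (vcross (V3 0 0 1) u).
Proof. intros Hx. rewrite <- crossF by auto. rewrite Fn. reflexivity. Qed.
Lemma dotF_e1 x u : s0 < x < s1 -> vdot (Frs x u) (e1 x) = vx u.
Proof. intros Hx. transitivity (vdot (Frs x u) (Frs x (V3 1 0 0))); [rewrite Fe1; reflexivity|]. rewrite dotF by auto. unfold vdot; simpl; ring. Qed.
Lemma dotF_e2 x u : s0 < x < s1 -> vdot (Frs x u) (e2 x) = vy u.
Proof. intros Hx. transitivity (vdot (Frs x u) (Frs x (V3 0 1 0))); [rewrite Fe2; reflexivity|]. rewrite dotF by auto. unfold vdot; simpl; ring. Qed.
Lemma dotF_n x u : s0 < x < s1 -> vdot (Frs x u) (nv x) = vz u.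
Proof. intros Hx. transitivity (vdot (Frs x u) (Frs x (V3 0 0 1))); [rewrite Fn; reflexivity|]. rewrite dotF by auto. unfold vdot; simpl; ring. Qed.

Definition nv1 x := vadd (vcross (e11 x) (e2 x)) (vcross (e1 x) (e21 x)).
Definition nv2 x := vadd (vadd (vcross (e12 x) (e2 x)) (vcross (e11 x) (e21 x)))
                         (vadd (vcross (e11 x) (e21 x)) (vcross (e1 x) (e22 x))).

Lemma D_nv x : s0 < x < s1 -> has_deriv3 nv x (nv1 x).
Proof.
  intros Hx. destruct (He1 x Hx) as [A _]. destruct (He2 x Hx) as [B _].
  exact (hd3_cross _ _ _ _ _ A B).
Qed.
Lemma D_nv1 x : s0 < x < s1 -> has_deriv3 nv1 x (nv2 x).
Proof.
  intros Hx. destruct (He1 x Hx) as [A1 A2]. destruct (He2 x Hx) as [B1 B2].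
  exact (hd3_add _ _ _ _ _ (hd3_cross _ _ _ _ _ A2 B1) (hd3_cross _ _ _ _ _ A1 B2)).
Qed.

Lemma F_nv1 x : s0 < x < s1 -> nv1 x = Frs x (V3 (- bb x) (- dd x) 0).
Proof.
  intros Hx. unfold nv1. rewrite (F_e11 x Hx), (F_e21 x Hx), crossF_e2, crosse1_F, Fr_add by auto.
  apply Fr_ext; vring.
Qed.

Lemma F_nv2 x : s0 < x < s1 ->
  nv2 x = Frs x (V3 (2 * aa x * dd x - gg3 x) (- 2 * aa x * bb x - hh3 x) (- (bb x ^ 2 + dd x ^ 2))).
Proof.
  intros Hx. unfold nv2. rewrite (F_e12 x Hx), (F_e22 x Hx), (F_e11 x Hx), (F_e21 x Hx).
  rewrite crossF_e2, crosse1_F, crossF, !Fr_add by auto.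
  apply Fr_ext; vring.
Qed.

Definition Dbl (f : R -> R) x := exists l, dpl f x l.

Lemma Dbl_cont f x : Dbl f x -> continuity_pt f x.
Proof. intros [l H]. exact (continuity_of_dpl f x l H). Qed.
Lemma Dbl_plus f g x : Dbl f x -> Dbl g x -> Dbl (fun y => f y + g y) x.
Proof. intros [l1 H1] [l2 H2]. eexists. apply dpl_plus; eauto. Qed.
Lemma Dbl_mult f g x : Dbl f x -> Dbl g x -> Dbl (fun y => f y * g y) x.
Proof. intros [l1 H1] [l2 H2]. eexists. apply dpl_mult; eauto. Qed.
Lemma Dbl_const k x : Dbl (fun _ => k) x.
Proof. eexists. apply dpl_const. Qed.
Lemma Dbl_dot f g x df dg : has_deriv3 f x df -> has_deriv3 g x dg -> Dbl (fun y => vdot (f y) (g y)) x.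
Proof. intros A B. eexists. apply dpl_dot; eauto. Qed.

Lemma Dbl_bb x : s0 < x < s1 -> Dbl bb x.
Proof. intros Hx. destruct (He1 x Hx) as [_ A]. exact (Dbl_dot _ _ _ _ _ A (D_nv x Hx)). Qed.
Lemma Dbl_dd x : s0 < x < s1 -> Dbl dd x.
Proof. intros Hx. destruct (He2 x Hx) as [_ A]. exact (Dbl_dot _ _ _ _ _ A (D_nv x Hx)). Qed.
Lemma Dbl_pp x : s0 < x < s1 -> Dbl pp x.
Proof. intros Hx. destruct (Hc x Hx) as [_ A]. destruct (He1 x Hx) as [B _]. exact (Dbl_dot _ _ _ _ _ A B). Qed.
Lemma Dbl_qq x : s0 < x < s1 -> Dbl qq x.
Proof. intros Hx. destruct (Hc x Hx) as [_ A]. destruct (He2 x Hx) as [B _]. exact (Dbl_dot _ _ _ _ _ A B). Qed.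
Lemma Dbl_al x : s0 < x < s1 -> Dbl al x.
Proof. intros Hx. destruct (He1 x Hx) as [B _]. exact (Dbl_dot _ _ _ _ _ (hd3_const v x) B). Qed.
Lemma Dbl_be x : s0 < x < s1 -> Dbl be x.
Proof. intros Hx. destruct (He2 x Hx) as [B _]. exact (Dbl_dot _ _ _ _ _ (hd3_const v x) B). Qed.
Lemma Dbl_r x : s0 < x < s1 -> Dbl r x.
Proof. intros Hx. destruct (Hr x Hx) as [A _]. eexists; eauto. Qed.

Lemma shrink a b x del : a < x < b -> 0 < del ->
  exists a' b', a' < x < b' /\ a <= a' /\ b' <= b /\ forall y, a' < y < b' -> Rabs (y - x) < del.
Proof.
  intros Hx Hd. exists (Rmax a (x - del)), (Rmin b (x + del)).
  split; [split; [apply Rmax_lub_lt| apply Rmin_glb_lt]; lra|].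
  split; [apply Rmax_l|]. split; [apply Rmin_l|].
  intros y [Hy1 Hy2]. pose proof (Rmax_r a (x - del)). pose proof (Rmin_r b (x + del)).
  apply Rabs_def1; lra.
Qed.

Lemma caseA x a1 b1 : s0 < x < s1 -> a1 < x < b1 ->
  (forall y, a1 < y < b1 -> al y = 0 /\ be y = 0) -> bb x = 0 /\ dd x = 0.
Proof.
  intros Hx Hx1 CA.
  destruct (He1 x Hx) as [A _]. destruct (He2 x Hx) as [B _].
  pose proof (dpl_const_loc _ _ _ a1 b1 0 Hx1 (fun y Hy => proj1 (CA y Hy)) (dpl_dot _ _ _ _ _ (hd3_const v x) A)) as E1.
  pose proof (dpl_const_loc _ _ _ a1 b1 0 Hx1 (fun y Hy => proj2 (CA y Hy)) (dpl_dot _ _ _ _ _ (hd3_const v x) B)) as E2.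
  assert (Z : forall w, vdot vzero w = 0) by (intros; unfold vdot, vzero; simpl; ring).
  rewrite Z in E1, E2.
  rewrite (F_v x Hx), (F_e11 x Hx), dotF in E1 by auto.
  rewrite (F_v x Hx), (F_e21 x Hx), dotF in E2 by auto.
  unfold vdot in E1, E2; simpl in E1, E2.
  destruct (CA x Hx1) as [Ha Hb]. rewrite Ha, Hb in E1, E2.
  destruct (Req_dec (ga x) 0) as [Hg|Hg].
  - exfalso. apply Hv. rewrite (F_v x Hx), Ha, Hb, Hg. apply Fr_zero.
  - split.
    + apply (Rmult_eq_reg_l (ga x)); [lra|auto].
    + apply (Rmult_eq_reg_l (ga x)); [lra|auto].
Qed.

Definition Esg sg y := (pp y + sg * r y * dd y) ^ 2 + (qq y - sg * r y * bb y) ^ 2.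

Lemma pointwise y : s0 < y < s1 -> 0 < bb y ^ 2 + dd y ^ 2 -> 0 < al y ^ 2 + be y ^ 2 ->
  mm y = 0 /\ r1 y = 0 /\ (Esg 1 y = 0 \/ Esg (-1) y = 0).
Proof.
  intros Hy Hk Hw. destruct (Harm y Hy) as [A4 [B4 [A3 [B3 _]]]].
  unfold HC in *. destruct (Hon y Hy) as [Hr0 _].
  exact (alg1 _ _ _ _ _ _ _ _ _ _ _ _ _ _ _ _ _ _ Hr0 Hk Hw A4 B4 A3 B3).
Qed.

Lemma caseB sg s2 a3 b3 : (sg = 1 \/ sg = -1) -> s0 < s2 < s1 -> a3 < s2 < b3 ->
  (forall y, a3 < y < b3 -> s0 < y < s1 /\ mm y = 0 /\ r1 y = 0 /\ Esg sg y = 0) ->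
  0 < bb s2 ^ 2 + dd s2 ^ 2 -> 0 < al s2 ^ 2 + be s2 ^ 2 -> False.
Proof.
  intros Hsg Hs2 Hs23 Hall Hk Hw.
  assert (Hc1 : forall y, a3 < y < b3 -> c1 y = vscal (- sg * r y) (vcross (nv y) (nv1 y))).
  { intros y Hy. destruct (Hall y Hy) as [HyI [Hm [_ He]]].
    unfold Esg in He. destruct (sumsq0 _ _ He) as [Hp Hq].
    rewrite (F_c1 y HyI), (F_nv1 y HyI), crossn_F, Fr_scal by auto. apply Fr_ext.
    rewrite Hm. replace (pp y) with (- sg * r y * dd y) by lra.
    replace (qq y) with (sg * r y * bb y) by lra. vring. }
  assert (Hr1 : r1 s2 = 0) by (destruct (Hall s2 Hs23) as [_ [_ [H _]]]; auto).
  assert (Hr2 : r2 s2 = 0).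
  { destruct (Hr s2 Hs2) as [_ B].
    exact (dpl_const_loc _ _ _ a3 b3 0 Hs23 (fun y Hy => proj1 (proj2 (proj2 (Hall y Hy)))) B). }
  assert (Dr : dpl (fun y => - sg * r y) s2 (- sg * r1 s2)).
  { destruct (Hr s2 Hs2) as [B _]. eapply dpl_eq; [apply dpl_mult; [apply dpl_const| exact B]|]. cbv beta. ring. }
  pose proof (hd3_scal _ _ _ _ _ Dr (hd3_cross _ _ _ _ _ (D_nv s2 Hs2) (D_nv1 s2 Hs2))) as DR.
  pose proof (hd3_ext_loc c1 _ _ _ a3 b3 Hs23 Hc1 DR) as DL.
  destruct (Hc s2 Hs2) as [_ DC].
  pose proof (hd3_unique _ _ _ _ DC DL) as Ec2.
  rewrite Hr1 in Ec2.
  rewrite (F_nv1 s2 Hs2), (F_nv2 s2 Hs2), crossF, !crossn_F in Ec2 by auto. repeat (rewrite Fr_scal in Ec2 || rewrite Fr_add in Ec2).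
  assert (K1 : kk1 s2 = - sg * r s2 * (2 * aa s2 * bb s2 + hh3 s2)).
  { unfold kk1. rewrite Ec2, dotF_e1 by auto. simpl. ring. }
  assert (K2 : kk2 s2 = - sg * r s2 * (2 * aa s2 * dd s2 - gg3 s2)).
  { unfold kk2. rewrite Ec2, dotF_e2 by auto. simpl. ring. }
  assert (K3 : kk3 s2 = 0).
  { unfold kk3. rewrite Ec2, dotF_n by auto. simpl. ring. }
  destruct (Hall s2 Hs23) as [_ [Hm [_ He]]].
  unfold Esg in He. destruct (sumsq0 _ _ He) as [Hp Hq].
  assert (Pp : pp s2 = - sg * r s2 * dd s2) by lra.
  assert (Qq : qq s2 = sg * r s2 * bb s2) by lra.
  destruct (Harm s2 Hs2) as [_ [_ [_ [_ [A2 B2]]]]].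
  unfold HC in A2, B2. rewrite Pp, Qq, Hm, Hr1, Hr2, K1, K2, K3 in A2, B2.
  destruct (Hon s2 Hs2) as [Hr0 _].
  exact (alg2 sg _ _ _ _ _ _ _ _ _ _ Hsg Hr0 Hk Hw A2 B2).
Qed.

Lemma Dbl_ext f g x : (forall y, f y = g y) -> Dbl g x -> Dbl f x.
Proof. intros H [l Hl]. exists l. apply (dpl_ext f g); auto. Qed.

Lemma Dbl_Esg sg x : s0 < x < s1 -> Dbl (Esg sg) x.
Proof.
  intros Hx.
  apply (Dbl_ext _ (fun y => (pp y + sg * r y * dd y) * (pp y + sg * r y * dd y)
                      + (qq y + (- sg) * r y * bb y) * (qq y + (- sg) * r y * bb y))).
  { intros y; unfold Esg; ring. }
  pose proof (Dbl_pp x Hx). pose proof (Dbl_qq x Hx). pose proof (Dbl_r x Hx).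
  pose proof (Dbl_bb x Hx). pose proof (Dbl_dd x Hx).
  repeat first [assumption | apply Dbl_plus | apply Dbl_mult | apply Dbl_const].
Qed.

Lemma claim x : s0 < x < s1 -> bb x = 0 /\ dd x = 0.
Proof.
  intros Hx.
  destruct (Req_dec (bb x ^ 2 + dd x ^ 2) 0) as [Z|NZ]; [apply sumsq0; auto|]. exfalso.
  assert (K0 : 0 < bb x ^ 2 + dd x ^ 2) by nra.
  assert (Ck : Dbl (fun y => bb y * bb y + dd y * dd y) x).
  { pose proof (Dbl_bb x Hx). pose proof (Dbl_dd x Hx).
    repeat first [assumption | apply Dbl_plus | apply Dbl_mult]. }
  destruct (pos_nbhd _ x (Dbl_cont _ _ Ck)) as [d1 [Hd1 Hn1]]; [simpl; nra|].
  destruct (shrink s0 s1 x d1 Hx Hd1) as [a1 [b1 [Hx1 [Ha1 [Hb1 Hin1]]]]].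
  assert (I1 : forall y, a1 < y < b1 -> s0 < y < s1 /\ 0 < bb y ^ 2 + dd y ^ 2).
  { intros y Hy. split; [lra|]. pose proof (Hn1 y (Hin1 y Hy)). simpl in *. nra. }
  destruct (classic (forall y, a1 < y < b1 -> al y = 0 /\ be y = 0)) as [CA|CB].
  { destruct (caseA x a1 b1 Hx Hx1 CA) as [B D]. rewrite B, D in K0. nra. }
  apply not_all_ex_not in CB. destruct CB as [s2 H2]. apply imply_to_and in H2.
  destruct H2 as [Hs21 Hnz].
  destruct (I1 s2 Hs21) as [Hs2 Hk2].
  assert (W2 : 0 < al s2 ^ 2 + be s2 ^ 2).
  { destruct (Req_dec (al s2 ^ 2 + be s2 ^ 2) 0) as [Z|NZ']; [|nra].
    exfalso; apply Hnz; apply sumsq0; auto. }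
  assert (Cw : Dbl (fun y => al y * al y + be y * be y) s2).
  { pose proof (Dbl_al s2 Hs2). pose proof (Dbl_be s2 Hs2).
    repeat first [assumption | apply Dbl_plus | apply Dbl_mult]. }
  destruct (pos_nbhd _ s2 (Dbl_cont _ _ Cw)) as [d2 [Hd2 Hn2]]; [simpl; nra|].
  destruct (shrink a1 b1 s2 d2 Hs21 Hd2) as [a2 [b2 [Hs22 [Ha2 [Hb2 Hin2]]]]].
  assert (I2 : forall y, a2 < y < b2 -> s0 < y < s1 /\ 0 < bb y ^ 2 + dd y ^ 2 /\ 0 < al y ^ 2 + be y ^ 2).
  { intros y Hy. destruct (I1 y ltac:(lra)) as [HyI Hky]. split; [auto|split; [auto|]].
    pose proof (Hn2 y (Hin2 y Hy)). simpl in *. nra. }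
  assert (PW : forall y, a2 < y < b2 -> s0 < y < s1 /\ mm y = 0 /\ r1 y = 0 /\ (Esg 1 y = 0 \/ Esg (-1) y = 0)).
  { intros y Hy. destruct (I2 y Hy) as [HyI [Hky Hwy]]. split; auto. apply pointwise; auto. }
  assert (Gen : forall sg osg, (sg = 1 /\ osg = -1 \/ sg = -1 /\ osg = 1) -> Esg sg s2 = 0 -> False).
  { intros sg osg Hso Es.
    assert (Hsg : sg = 1 \/ sg = -1) by (destruct Hso as [[A _]|[A _]]; auto).
    destruct (Hon s2 Hs2) as [Hr0 _].
    assert (Po : 0 < Esg osg s2).
    { unfold Esg in *. destruct (sumsq0 _ _ Es) as [Hp Hq].
      replace (pp s2) with (- sg * r s2 * dd s2) by lra.
      replace (qq s2) with (sg * r s2 * bb s2) by lra.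
      replace ((- sg * r s2 * dd s2 + osg * r s2 * dd s2) ^ 2 + (sg * r s2 * bb s2 - osg * r s2 * bb s2) ^ 2)
        with (4 * r s2 ^ 2 * (bb s2 ^ 2 + dd s2 ^ 2))
        by (destruct Hso as [[-> ->]|[-> ->]]; ring).
      apply Rmult_lt_0_compat; [|auto]. nra. }
    destruct (pos_nbhd _ s2 (Dbl_cont _ _ (Dbl_Esg osg s2 Hs2)) Po) as [d3 [Hd3 Hn3]].
    destruct (shrink a2 b2 s2 d3 Hs22 Hd3) as [a3 [b3 [Hs23 [Ha3 [Hb3 Hin3]]]]].
    apply (caseB sg s2 a3 b3 Hsg Hs2 Hs23); auto.
    intros y Hy. destruct (PW y ltac:(lra)) as [HyI [Hm [Hr1 Hd]]].
      pose proof (Hn3 y (Hin3 y Hy)) as Hpos.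
      split; [auto|split; [auto|split; [auto|]]].
      destruct Hso as [[-> ->]|[-> ->]]; destruct Hd as [Hd|Hd]; auto; rewrite Hd in Hpos; lra. }
  destruct (PW s2 Hs22) as [_ [_ [_ [E|E]]]].
  - apply (Gen 1 (-1)); auto.
  - apply (Gen (-1) 1); auto.
Qed.

Lemma const_on f : (forall y, s0 < y < s1 -> dpl f y 0) ->
  forall u w, s0 < u < s1 -> s0 < w < s1 -> f u = f w.
Proof.
  intros H u w Hu Hw.
  destruct (Rtotal_order u w) as [Hlt|[Heq|Hgt]].
  - destruct (MVT_cor2 f (fun _ => 0) u w Hlt) as [cc [E _]].
    { intros cc Hcc. apply H. lra. }
    lra.
  - subst; reflexivity.
  - destruct (MVT_cor2 f (fun _ => 0) w u Hgt) as [cc [E _]].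
    { intros cc Hcc. apply H. lra. }
    lra.
Qed.

Lemma main_concl s s' : s0 < s < s1 -> s0 < s' < s1 -> vcross (nv s) (nv s') = vzero.
Proof.
  intros Hs Hs'.
  assert (Z : forall y, s0 < y < s1 -> has_deriv3 nv y vzero).
  { intros y Hy. eapply hd3_eq; [apply D_nv; auto|].
    rewrite (F_nv1 y Hy). destruct (claim y Hy) as [B D]. rewrite B, D.
    transitivity (Frs y (V3 0 0 0)); [apply Fr_ext; vring| apply Fr_zero]. }
  assert (E : nv s' = nv s).
  { apply vec_eq;
    [apply (const_on (fun y => vx (nv y)))|apply (const_on (fun y => vy (nv y)))|apply (const_on (fun y => vz (nv y)))];
    auto; intros y Hy; destruct (Z y Hy) as [A [B C]]; auto. }
  rewrite E. unfold nv. generalize (e1 s) (e2 s). intros. vring.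
Qed.
End Main.

Theorem theorem1 (alpha beta gamma : R) (s0 s1 t0 t1 : R)
  (c e1 e2 : R -> vec3) (r : R -> R) :
  (alpha <> 0 \/ beta <> 0 \/ gamma <> 0) ->
  s0 < s1 -> t0 < t1 ->
  cyclic_data s0 s1 c e1 e2 r ->
  phi_minimal_param (V3 alpha beta gamma) s0 s1 t0 t1 (cyclic_param c e1 e2 r) ->
  forall s s', s0 < s < s1 -> s0 < s' < s1 ->
    vcross (vcross (e1 s) (e2 s)) (vcross (e1 s') (e2 s')) = vzero.
Proof.
  intros Hne Hs Ht [Hc [He1 [He2 [Hr Hon]]]] [Xs [Xt [Xss [Xst [Xtt HX]]]]] s s' Hs1 Hs2.
  destruct (smooth3_derivs _ _ _ Hc) as [c1 [c2 Hc']].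
  destruct (smooth3_derivs _ _ _ He1) as [e11 [e12 He1']].
  destruct (smooth3_derivs _ _ _ He2) as [e21 [e22 He2']].
  destruct (smooth_derivs _ _ _ Hr) as [r1 [r2 Hr']].
  assert (Hv : V3 alpha beta gamma <> vzero).
  { intro H. injection H. intros. destruct Hne as [A|[A|A]]; auto. }
  exact (main_concl (V3 alpha beta gamma) s0 s1 t0 t1 c e1 e2 r c1 c2 e11 e12 e21 e22 r1 r2
     Xs Xt Xss Xst Xtt Hv Ht Hc' He1' He2' Hr' Hon HX s s' Hs1 Hs2).
Qed.
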